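(* Consider the system of three ODEs in the unknowns $(T_0(t),T_2(t),\eta(t))\in\mathbb R^3$: \[ R\dot T_0 = Q\bigl(s_0-\overline{\alpha}_0(\eta)\bigr)-A-BT_0,\qquad R\dot T_2 = Q\bigl(s_2-\overline{\alpha}_2(\eta)\bigr)-(B+6D)T_2,\qquad \dot\eta=\varepsilon\bigl(T_0+T_2\,p_2(\eta)-T_c\bigr), \] with parameter values $Q=343$, $A=202$, $B=1.9$, $\alpha_1=0.32$, $\alpha_2=0.62$, $T_c=-10$, $D=0.35$, any fixed $R>0$, and $\varepsilon>0$. Then, for all sufficiently small $\varepsilon>0$, this system has exactly two equilibrium solutions whose $\eta$-coordinate lies in $[0,1]$, say with $\eta$-coordinates $\eta_1<\eta_2$. The equilibrium with $\eta=\eta_1$ (the larger ice cap) is unstable, and the equilibrium with $\eta=\eta_2$ (the smaller ice cap) is asymptotically stable.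
   Context: $p_0(y)=1$ and $p_2(y)=\tfrac12(3y^2-1)$ are the Legendre polynomials of degree 0 and 2. The insolation distribution is $s(y)=s_0p_0(y)+s_2p_2(y)$ with $s_0=1$, $s_2=-0.477$. Set $q_0(y)=s(y)p_0(y)$, $q_2(y)=s(y)p_2(y)$. For $n=0,1$, define the polynomials in $\eta$ \[ \overline{\alpha}_{2n}(\eta)=\alpha_2 s_{2n}-(4n+1)(\alpha_2-\alpha_1)\int_0^\eta q_{2n}(y)\,dy . \] (These arise from the albedo $\alpha(y,\eta)=\alpha_1$ for $y<\eta$, $\alpha_2$ for $y>\eta$, with $\overline{\alpha}_{2n}(\eta)=(4n+1)\int_0^1\alpha(y,\eta)q_{2n}(y)\,dy$.) The variable $\eta$ (the ice line, $y=\sin(\text{latitude})$) is interpreted so that smaller $\eta$ means a larger ice cap. *)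

(* Defs.v *)
From Stdlib Require Import Reals Lra.
Open Scope R_scope.

Definition p0 (y : R) : R := 1.
Definition p2 (y : R) : R := (3 * y ^ 2 - 1) / 2.
Definition s0 : R := 1.
Definition s2 : R := -0.477.
Definition s (y : R) : R := s0 * p0 y + s2 * p2 y.
Definition q0 (y : R) : R := s y * p0 y.
Definition q2 (y : R) : R := s y * p2 y.

(* Explicit antiderivatives: Iq0 eta = int_0^eta q0(y) dy,
   Iq2 eta = int_0^eta q2(y) dy (q0, q2 are polynomials).
   int_0^eta p2 = (eta^3 - eta)/2,
   int_0^eta p2^2 = (9 eta^5/5 - 2 eta^3 + eta)/4. *)
Definition Iq0 (eta : R) : R := s0 * eta + s2 * ((eta ^ 3 - eta) / 2).
Definition Iq2 (eta : R) : R :=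
  s0 * ((eta ^ 3 - eta) / 2) + s2 * ((9 / 5 * eta ^ 5 - 2 * eta ^ 3 + eta) / 4).


Definition Qc : R := 343.
Definition Ac : R := 202.
Definition Bc : R := 1.9.
Definition alpha1 : R := 0.32.
Definition alpha2 : R := 0.62.
Definition Tc : R := -10.
Definition Dc : R := 0.35.

(* alpha-bar_{2n}(eta) = alpha2 s_{2n} - (4n+1)(alpha2 - alpha1) int_0^eta q_{2n} *)
Definition alphabar0 (eta : R) : R := alpha2 * s0 - 1 * (alpha2 - alpha1) * Iq0 eta.
Definition alphabar2 (eta : R) : R := alpha2 * s2 - 5 * (alpha2 - alpha1) * Iq2 eta.

Definition state : Type := (R * R * R)%type.
Definition T0_of (x : state) : R := fst (fst x).
Definition T2_of (x : state) : R := snd (fst x).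
Definition eta_of (x : state) : R := snd x.

Definition rhs_T0 (Rr : R) (x : state) : R :=
  (Qc * (s0 - alphabar0 (eta_of x)) - Ac - Bc * T0_of x) / Rr.
Definition rhs_T2 (Rr : R) (x : state) : R :=
  (Qc * (s2 - alphabar2 (eta_of x)) - (Bc + 6 * Dc) * T2_of x) / Rr.
Definition rhs_eta (eps : R) (x : state) : R :=
  eps * (T0_of x + T2_of x * p2 (eta_of x) - Tc).

Definition is_equilibrium (Rr eps : R) (x : state) : Prop :=
  rhs_T0 Rr x = 0 /\ rhs_T2 Rr x = 0 /\ rhs_eta eps x = 0.

Definition dist3 (x y : state) : R :=
  Rmax (Rabs (T0_of x - T0_of y))
       (Rmax (Rabs (T2_of x - T2_of y)) (Rabs (eta_of x - eta_of y))).

Definition is_solution_on (Rr eps : R) (x : R -> state) (Tm : R) : Prop :=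
  (forall t, 0 < t < Tm ->
     derivable_pt_lim (fun u => T0_of (x u)) t (rhs_T0 Rr (x t)) /\
     derivable_pt_lim (fun u => T2_of (x u)) t (rhs_T2 Rr (x t)) /\
     derivable_pt_lim (fun u => eta_of (x u)) t (rhs_eta eps (x t))) /\
  (forall e, 0 < e -> exists d, 0 < d /\
     forall t, 0 <= t < d -> t < Tm -> dist3 (x t) (x 0) < e).

Definition is_global_solution (Rr eps : R) (x : R -> state) : Prop :=
  forall Tm, 0 < Tm -> is_solution_on Rr eps x Tm.

Definition lyapunov_stable (Rr eps : R) (p : state) : Prop :=
  forall e, 0 < e -> exists d, 0 < d /\
    forall (x : R -> state) (Tm : R), is_solution_on Rr eps x Tm ->
      dist3 (x 0) p < d ->
      forall t, 0 <= t < Tm -> dist3 (x t) p < e.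

Definition asymptotically_stable (Rr eps : R) (p : state) : Prop :=
  lyapunov_stable Rr eps p /\
  exists d, 0 < d /\
    forall x : R -> state, is_global_solution Rr eps x ->
      dist3 (x 0) p < d ->
      forall e, 0 < e -> exists t0, forall t, t0 <= t -> dist3 (x t) p < e.

Definition unstable (Rr eps : R) (p : state) : Prop :=
  ~ lyapunov_stable Rr eps p.

(* Main.v *)
Require Import Defs.
From Stdlib Require Import Reals Lra Psatz Classical.
From Coquelicot Require Import Coquelicot.
Open Scope R_scope.
Notation fact := Factorial.fact.

Lemma cpt_intro (f : R -> R) x :
  (forall eps, 0 < eps -> exists d, 0 < d /\ forall y, Rabs (y - x) < d -> Rabs (f y - f x) < eps) ->
  continuity_pt f x.
Proof.
  intros H eps Heps. destruct (H eps Heps) as [d [Hd Hy]].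
  exists d; split; [lra|]. intros y [_ Hyd]. apply Hy. exact Hyd.
Qed.

Lemma cpt_elim (f : R -> R) x : continuity_pt f x ->
  forall eps, 0 < eps -> exists d, 0 < d /\ forall y, Rabs (y - x) < d -> Rabs (f y - f x) < eps.
Proof.
  intros H eps Heps. destruct (H eps Heps) as [d [Hd Hy]].
  exists d; split; [lra|]. intros y Hyx.
  destruct (Req_dec y x) as [->|Hne].
  - rewrite Rminus_diag, Rabs_R0. lra.
  - apply (Hy y). split; [split; [exact I| auto]| exact Hyx].
Qed.

Lemma is_derive_extR (f g : R -> R) x (l : R) :
  (forall t, f t = g t) -> is_derive f x l -> is_derive g x l.
Proof. intros H. apply is_derive_ext. exact H. Qed.

Lemma der_cpt (f : R -> R) x l : is_derive f x l -> continuity_pt f x.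
Proof.
  intro H. apply derivable_continuous_pt. exists l. apply is_derive_Reals. exact H.
Qed.

Lemma cmp_gen (e de G dG : R -> R) t :
  0 <= t -> e 0 = 0 -> G 0 = 0 ->
  (forall s, 0 <= s <= t -> is_derive e s (de s)) ->
  (forall s, 0 <= s <= t -> is_derive G s (dG s)) ->
  (forall s, 0 <= s <= t -> Rabs (de s) <= dG s) ->
  Rabs (e t) <= G t.
Proof.
  intros Ht He0 HG0 De DG Hb.
  destruct (Req_dec t 0) as [->|Htn].
  - rewrite He0, HG0, Rabs_R0; lra.
  assert (Hmm : Rmin 0 t = 0 /\ Rmax 0 t = t) by (split; [apply Rmin_left|apply Rmax_right]; lra).
  destruct Hmm as [Hmin Hmax].
  assert (A1 : G t - e t >= 0).
  { destruct (MVT_gen (fun s => G s - e s) 0 t (fun s => dG s - de s)) as [c [Hc Heq]].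
    - intros x Hx. rewrite Hmin, Hmax in Hx. apply (is_derive_minus G e). apply DG; lra. apply De; lra.
    - intros x Hx. rewrite Hmin, Hmax in Hx. apply continuity_pt_minus; eapply der_cpt; [apply DG|apply De]; lra.
    - rewrite Hmin, Hmax in Hc. rewrite He0, HG0 in Heq.
      specialize (Hb c Hc). apply Rabs_le_between in Hb.
      assert (0 <= (dG c - de c) * (t - 0)) by (apply Rmult_le_pos; lra). lra. }
  assert (A2 : G t + e t >= 0).
  { destruct (MVT_gen (fun s => G s + e s) 0 t (fun s => dG s + de s)) as [c [Hc Heq]].
    - intros x Hx. rewrite Hmin, Hmax in Hx. apply (is_derive_plus G e). apply DG; lra. apply De; lra.
    - intros x Hx. rewrite Hmin, Hmax in Hx. apply continuity_pt_plus; eapply der_cpt; [apply DG|apply De]; lra.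
    - rewrite Hmin, Hmax in Hc. rewrite He0, HG0 in Heq.
      specialize (Hb c Hc). apply Rabs_le_between in Hb.
      assert (0 <= (dG c + de c) * (t - 0)) by (apply Rmult_le_pos; lra). lra. }
  apply Rabs_le. lra.
Qed.

Lemma is_derive_powfact (n : nat) (a s : R) :
  is_derive (fun s => a * s ^ (S n) / INR (fact (S n))) s (a * s ^ n / INR (fact n)).
Proof.
  assert (Hf : INR (fact n) <> 0) by (apply not_0_INR, Factorial.fact_neq_0).
  auto_derive; auto.
  replace (match n with 0%nat => 1 | S _ => INR n + 1 end) with (INR n + 1) by (destruct n; simpl; ring).
  rewrite plus_INR, mult_INR. pose proof (pos_INR n).
  field. split; auto. replace (INR (fact n) + INR n * INR (fact n)) with (INR (fact n) * (INR n + 1)) by ring. apply Rmult_integral_contrapositive_currified; auto; lra.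
Qed.

Lemma pow_fact_exp (n : nat) (x : R) : 0 <= x -> x ^ n / INR (fact n) <= exp x.
Proof.
  revert x. induction n as [|n IH]; intros x Hx.
  - simpl. rewrite Rdiv_1_r. pose proof (exp_ineq1_le x). lra.
  - assert (H : Rabs ((fun s => 1 * s ^ (S n) / INR (fact (S n))) x) <= (fun s => exp s - 1) x).
    { apply (cmp_gen (fun s => 1 * s ^ (S n) / INR (fact (S n))) (fun s => 1 * s ^ n / INR (fact n)) (fun s => exp s - 1) (fun s => exp s) x Hx).
      - simpl. rewrite Rmult_0_l, Rmult_0_r. unfold Rdiv; ring.
      - rewrite exp_0; ring.
      - intros; apply is_derive_powfact.
      - intros s _. auto_derive; auto; ring.
      - intros s Hs. rewrite Rmult_1_l. rewrite Rabs_pos_eq. apply IH; lra.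
        unfold Rdiv; apply Rmult_le_pos. apply pow_le; lra. left; apply Rinv_0_lt_compat, lt_0_INR, Factorial.lt_O_fact. }
    cbv beta in H. rewrite Rmult_1_l in H. pose proof (Rle_abs (x ^ S n / INR (fact (S n)))).
    lra.
Qed.

Lemma geo_partial (u : nat -> R) K :
  (forall n, Rabs (u (S n) - u n) <= K * (/2) ^ n) ->
  forall n m, Rabs (u (n + m)%nat - u n) <= 2 * K * (/2) ^ n * (1 - (/2) ^ m).
Proof.
  intros H n m. induction m as [|m IH].
  - rewrite Nat.add_0_r, Rminus_diag, Rabs_R0. simpl; lra.
  - replace (n + S m)%nat with (S (n + m)) by lia.
    replace (u (S (n + m)) - u n) with ((u (S (n + m)) - u (n + m)%nat) + (u (n + m)%nat - u n)) by ring.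
    eapply Rle_trans. apply Rabs_triang.
    specialize (H (n + m)%nat). rewrite pow_add in H.
    simpl. nra.
Qed.

Lemma abs_sub_le a b : Rabs (a - b) <= Rabs a + Rabs b.
Proof. unfold Rminus. eapply Rle_trans. apply Rabs_triang. rewrite Rabs_Ropp; lra. Qed.

Lemma geo_lim (u : nat -> R) K :
  (forall n, Rabs (u (S n) - u n) <= K * (/2) ^ n) ->
  exists l, Un_cv u l /\ forall n, Rabs (l - u n) <= 2 * K * (/2) ^ n.
Proof.
  intros H.
  assert (HK : 0 <= K).
  { specialize (H 0%nat). simpl in H. pose proof (Rabs_pos (u 1%nat - u 0%nat)). lra. }
  assert (Hq : forall n, 0 < (/2) ^ n) by (intros; apply pow_lt; lra).
  assert (Hp := geo_partial u K H).
  assert (Hb : forall n m, (n <= m)%nat -> Rabs (u m - u n) <= 2 * K * (/2) ^ n).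
  { intros n m Hnm. replace m with (n + (m - n))%nat by lia. eapply Rle_trans. apply Hp.
    pose proof (Hq (m - n)%nat). pose proof (Hq n).
    assert (0 <= 2*K*(/2)^n * (/2)^(m-n)) by (repeat apply Rmult_le_pos; lra). lra. }
  assert (Hc : Cauchy_crit u).
  { intros eps Heps.
    destruct (pow_lt_1_zero (/2) ltac:(rewrite Rabs_pos_eq; lra) (eps / (4 * K + 1))) as [N HN].
    { apply Rdiv_lt_0_compat; lra. }
    exists N. intros n m Hn Hm. unfold R_dist.
    specialize (HN N (Nat.le_refl N)). rewrite Rabs_pos_eq in HN by (left; apply Hq).
    pose proof (Hb N n Hn). pose proof (Hb N m Hm).
    replace (u n - u m) with ((u n - u N) - (u m - u N)) by ring.
    eapply Rle_lt_trans. apply abs_sub_le.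
    assert (HN' : (4 * K + 1) * (/2) ^ N < eps).
    { apply (Rmult_lt_compat_l (4*K+1)) in HN; [|lra].
      assert (E: (4*K+1) * (eps/(4*K+1)) = eps) by (field; lra). lra. }
    pose proof (Hq N). nra. }
  destruct (Stdlib.Reals.Rcomplete.R_complete u Hc) as [l Hl]. exists l. split; auto.
  intro n. apply Rnot_lt_le. intro Hlt.
  destruct (Hl (Rabs (l - u n) - 2 * K * (/2) ^ n) ltac:(lra)) as [N HN].
  specialize (HN (max N n) (Nat.le_max_l N n)). unfold R_dist in HN.
  specialize (Hb n (max N n) (Nat.le_max_r N n)).
  assert (E : l - u n = -(u (max N n) - l) + (u (max N n) - u n)) by ring.
  pose proof (Rabs_triang (-(u (max N n) - l)) (u (max N n) - u n)).
  rewrite Rabs_Ropp, <- E in H0. lra.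
Qed.

Inductive idx := I1 | I2 | I3.
Definition st := (R * R * R)%type.
Definition cs (i : idx) (v : st) : R :=
  match i with I1 => fst (fst v) | I2 => snd (fst v) | I3 => snd v end.
Definition mk3 (f : idx -> R) : st := (f I1, f I2, f I3).
Lemma cs_mk3 i f : cs i (mk3 f) = f i.
Proof. destruct i; reflexivity. Qed.
Lemma mk3_cs v : mk3 (fun i => cs i v) = v.
Proof. destruct v as [[a b] c]; reflexivity. Qed.
Definition nrm (u v : st) : R :=
  Rabs (cs I1 u - cs I1 v) + Rabs (cs I2 u - cs I2 v) + Rabs (cs I3 u - cs I3 v).

Definition Lip (F : idx -> st -> R) (L : R) :=
  forall i u v, Rabs (F i u - F i v) <= L * nrm u v.

Lemma lip_cpt F L (g : R -> st) t i : 0 <= L -> Lip F L ->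
  (forall j, continuity_pt (fun s => cs j (g s)) t) ->
  continuity_pt (fun s => F i (g s)) t.
Proof.
  intros HL HF Hc. apply cpt_intro. intros eps Heps.
  set (e := eps / (3 * (L + 1))).
  assert (He : 0 < e) by (unfold e; apply Rdiv_lt_0_compat; lra).
  destruct (cpt_elim _ _ (Hc I1) e He) as [d1 [Hd1 H1]].
  destruct (cpt_elim _ _ (Hc I2) e He) as [d2 [Hd2 H2]].
  destruct (cpt_elim _ _ (Hc I3) e He) as [d3 [Hd3 H3]].
  exists (Rmin d1 (Rmin d2 d3)). split.
  { apply Rmin_pos; auto. apply Rmin_pos; auto. }
  intros y Hy.
  assert (Hy1 : Rabs (y - t) < d1) by (eapply Rlt_le_trans; [exact Hy| apply Rmin_l]).
  assert (Hy2 : Rabs (y - t) < d2) by (eapply Rlt_le_trans; [exact Hy| eapply Rle_trans; [apply Rmin_r|apply Rmin_l]]).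
  assert (Hy3 : Rabs (y - t) < d3) by (eapply Rlt_le_trans; [exact Hy| eapply Rle_trans; [apply Rmin_r|apply Rmin_r]]).
  specialize (H1 y Hy1). specialize (H2 y Hy2). specialize (H3 y Hy3).
  eapply Rle_lt_trans. apply HF. unfold nrm.
  assert (E : (L+1) * (3 * e) = eps) by (unfold e; field; lra).
  assert (L * (Rabs (cs I1 (g y) - cs I1 (g t)) + Rabs (cs I2 (g y) - cs I2 (g t)) +
     Rabs (cs I3 (g y) - cs I3 (g t))) <= L * (3 * e)).
  { apply Rmult_le_compat_l; lra. }
  nra.
Qed.

Lemma is_derive_cplus (f : R -> R) c x l : is_derive f x l -> is_derive (fun s => c + f s) x l.
Proof.
  intro H. assert (H2 := is_derive_plus (fun _ => c) f x zero l (is_derive_const c x) H).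
  rewrite plus_zero_l in H2. exact H2.
Qed.

Fixpoint pic (F : idx -> st -> R) (y0 : st) (n : nat) (t : R) : st :=
  match n with
  | O => y0
  | S m => mk3 (fun i => cs i y0 + RInt (fun s => F i (pic F y0 m s)) 0 t)
  end.

Lemma pic_0 F y0 n : pic F y0 n 0 = y0.
Proof.
  destruct n; simpl; auto.
  transitivity (mk3 (fun i => cs i y0)); [|apply mk3_cs].
  unfold mk3. f_equal; [f_equal|]; rewrite RInt_point; unfold zero; simpl; ring.
Qed.

Lemma pic_props F L y0 : 0 <= L -> Lip F L -> forall n,
  (forall i t, continuity_pt (fun s => F i (pic F y0 n s)) t) /\
  (forall i t, is_derive (fun s => cs i (pic F y0 (S n) s)) t (F i (pic F y0 n t))).
Proof.
  intros HL HF.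
  assert (Hder : forall n, (forall i t, continuity_pt (fun s => F i (pic F y0 n s)) t) ->
    forall i t, is_derive (fun s => cs i (pic F y0 (S n) s)) t (F i (pic F y0 n t))).
  { intros n Hc i t. simpl.
    apply (is_derive_extR (fun s => cs i y0 + RInt (fun s0 => F i (pic F y0 n s0)) 0 s)).
    { intros; rewrite cs_mk3; reflexivity. }
    apply is_derive_cplus.
    apply (is_derive_RInt (fun s0 => F i (pic F y0 n s0)) (fun s => RInt (fun s0 => F i (pic F y0 n s0)) 0 s) 0 t).
    - apply filter_forall. intros b. apply (RInt_correct (V:=R_CompleteNormedModule)). apply (ex_RInt_continuous (V:=R_CompleteNormedModule)).
      intros z _. apply continuity_pt_filterlim. apply Hc.
    - apply continuity_pt_filterlim. apply Hc. }
  induction n as [|n IH].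
  - assert (Hc : forall i t, continuity_pt (fun s => F i (pic F y0 0 s)) t).
    { intros; simpl. apply continuity_pt_const. intros a b; reflexivity. }
    split; auto.
  - destruct IH as [IHc IHd]. split.
    + intros i t. apply (lip_cpt F L); auto. intros j. eapply der_cpt. apply IHd.
    + apply Hder. intros i t. apply (lip_cpt F L); auto. intros j. eapply der_cpt. apply IHd.
Qed.

Lemma is_derive_Rminus (f g : R -> R) x a b :
  is_derive f x a -> is_derive g x b -> is_derive (fun s => f s - g s) x (a - b).
Proof. intros H1 H2. apply (is_derive_minus f g x a b H1 H2). Qed.

Lemma is_derive_Rconst (c x : R) : is_derive (fun _ : R => c) x 0.
Proof. exact (is_derive_const (K:=R_AbsRing) (V:=R_NormedModule) c x). Qed.

Lemma pic_bound F L y0 : 0 <= L -> Lip F L ->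
  forall n t, 0 <= t -> forall i,
  Rabs (cs i (pic F y0 (S n) t) - cs i (pic F y0 n t)) <=
   ((Rabs (F I1 y0) + Rabs (F I2 y0) + Rabs (F I3 y0)) * (3 * L) ^ n) * t ^ (S n) / INR (fact (S n)).
Proof.
  intros HL HF. set (C := Rabs (F I1 y0) + Rabs (F I2 y0) + Rabs (F I3 y0)).
  pose proof (pic_props F L y0 HL HF) as PP.
  assert (HC : forall i, Rabs (F i y0) <= C).
  { intros []; unfold C; pose proof (Rabs_pos (F I1 y0)); pose proof (Rabs_pos (F I2 y0));
    pose proof (Rabs_pos (F I3 y0)); lra. }
  induction n as [|n IH]; intros t Ht i.
  - apply (cmp_gen (fun s => cs i (pic F y0 1 s) - cs i (pic F y0 0 s)) (fun s => F i y0 - 0)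
       (fun s => (C * (3*L)^0) * s ^ 1 / INR (fact 1)) (fun s => (C * (3*L)^0) * s ^ 0 / INR (fact 0)) t Ht).
    + rewrite !pic_0; ring.
    + simpl; unfold Rdiv; ring.
    + intros s _. apply is_derive_Rminus. apply (proj2 (PP 0%nat)). simpl. apply is_derive_Rconst.
    + intros s _. apply is_derive_powfact.
    + intros s _. rewrite Rminus_0_r. simpl. rewrite !Rmult_1_r, Rdiv_1_r. apply HC.
  - apply (cmp_gen (fun s => cs i (pic F y0 (S (S n)) s) - cs i (pic F y0 (S n) s))
       (fun s => F i (pic F y0 (S n) s) - F i (pic F y0 n s))
       (fun s => (C * (3*L)^(S n)) * s ^ (S (S n)) / INR (fact (S (S n))))
       (fun s => (C * (3*L)^(S n)) * s ^ (S n) / INR (fact (S n))) t Ht).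
    + rewrite !pic_0; ring.
    + simpl; unfold Rdiv; ring.
    + intros s _. apply is_derive_Rminus; apply (proj2 (PP _)).
    + intros s _. apply is_derive_powfact.
    + intros s Hs. eapply Rle_trans. apply HF. unfold nrm.
      pose proof (IH s (proj1 Hs) I1). pose proof (IH s (proj1 Hs) I2). pose proof (IH s (proj1 Hs) I3).
      replace ((C * (3 * L) ^ S n) * s ^ S n / INR (fact (S n))) with
        (L * (3 * ((C * (3 * L) ^ n) * s ^ S n / INR (fact (S n))))) by (change ((3*L)^(S n)) with (3*L*(3*L)^n); field; apply not_0_INR, Factorial.fact_neq_0).
      apply Rmult_le_compat_l; lra.
Qed.

Lemma bnd_geo C M t T n : 0 <= C -> 0 <= M -> 0 <= t <= T ->
  C * M ^ n * t ^ (S n) / INR (fact (S n)) <= C * t * exp (2 * M * T) * (/2) ^ n.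
Proof.
  intros HC HM Ht.
  assert (Hf : 0 < INR (fact n)) by apply INR_fact_lt_0.
  assert (Hf2 : INR (fact n) <= INR (fact (S n))).
  { rewrite fact_simpl, mult_INR, S_INR. pose proof (pos_INR n). nra. }
  assert (Htn : t ^ n <= T ^ n) by (apply pow_incr; lra).
  assert (HE := pow_fact_exp n (2 * M * T) ltac:(nra)).
  rewrite Rpow_mult_distr in HE. rewrite Rpow_mult_distr in HE.
  assert (P1 : 0 <= M ^ n) by (apply pow_le; lra).
  assert (P2 : 0 <= t ^ n) by (apply pow_le; lra).
  assert (P3 : 0 < 2 ^ n) by (apply pow_lt; lra).
  assert (Hinv : (/2) ^ n * 2 ^ n = 1) by (rewrite <- Rpow_mult_distr, Rinv_l, pow1; lra).
  apply Rle_trans with (C * t * (M ^ n * T ^ n / INR (fact n))).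
  - change (t ^ S n) with (t * t ^ n).
    unfold Rdiv. 
    apply Rle_trans with (C * t * (M ^ n * t ^ n) * / INR (fact n)).
    + replace (C * M ^ n * (t * t ^ n) * / INR (fact (S n))) with (C * t * (M ^ n * t ^ n) * / INR (fact (S n))) by ring.
      apply Rmult_le_compat_l. repeat apply Rmult_le_pos; lra.
      apply Rinv_le_contravar; lra.
    + replace (C * t * (M ^ n * T ^ n * / INR (fact n))) with (C * t * (M ^ n * T ^ n) * / INR (fact n)) by ring.
      apply Rmult_le_compat_r. left; apply Rinv_0_lt_compat; lra.
      apply Rmult_le_compat_l. apply Rmult_le_pos; lra. apply Rmult_le_compat_l; lra.
  - replace (C * t * exp (2 * M * T) * (/2) ^ n) with (C * t * (exp (2 * M * T) * (/2) ^ n)) by ring.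
    apply Rmult_le_compat_l. apply Rmult_le_pos; lra.
    replace (M ^ n * T ^ n / INR (fact n)) with (2 ^ n * M ^ n * T ^ n / INR (fact n) * (/2) ^ n).
    + apply Rmult_le_compat_r. apply pow_le; lra. exact HE.
    + replace (2 ^ n * M ^ n * T ^ n / INR (fact n) * (/ 2) ^ n) with
        (((/ 2) ^ n * 2 ^ n) * (M ^ n * T ^ n / INR (fact n))) by (unfold Rdiv; ring).
      rewrite Hinv; ring.
Qed.

Definition ylim F y0 (i : idx) (t : R) : R := real (Lim_seq (fun n => cs i (pic F y0 n t))).

Lemma ylim_props F L y0 : 0 <= L -> Lip F L ->
  forall t T, 0 <= t <= T -> forall i,
  Un_cv (fun n => cs i (pic F y0 n t)) (ylim F y0 i t) /\
  forall n, Rabs (ylim F y0 i t - cs i (pic F y0 n t)) <=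
     2 * ((Rabs (F I1 y0) + Rabs (F I2 y0) + Rabs (F I3 y0)) * t * exp (2 * (3 * L) * T)) * (/2) ^ n.
Proof.
  intros HL HF t T Ht i.
  set (C := Rabs (F I1 y0) + Rabs (F I2 y0) + Rabs (F I3 y0)).
  assert (HC : 0 <= C) by (unfold C; pose proof (Rabs_pos (F I1 y0)); pose proof (Rabs_pos (F I2 y0));
    pose proof (Rabs_pos (F I3 y0)); lra).
  destruct (geo_lim (fun n => cs i (pic F y0 n t)) (C * t * exp (2 * (3 * L) * T))) as [l [Hl Hb]].
  { intros n. eapply Rle_trans. apply (pic_bound F L y0 HL HF n t (proj1 Ht)).
    apply bnd_geo; auto; lra. }
  assert (E : ylim F y0 i t = l).
  { unfold ylim. rewrite (is_lim_seq_unique _ l). reflexivity. apply is_lim_seq_Reals. exact Hl. }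
  rewrite E. split; auto.
Qed.

Lemma ylim_0 F y0 i : ylim F y0 i 0 = cs i y0.
Proof.
  unfold ylim. rewrite (Lim_seq_ext _ (fun _ => cs i y0)) by (intros; rewrite pic_0; auto).
  rewrite Lim_seq_const. reflexivity.
Qed.

Lemma Un_cv_S (u : nat -> R) l : Un_cv u l -> Un_cv (fun n => u (S n)) l.
Proof. intros H eps He. destruct (H eps He) as [N HN]. exists N. intros n Hn. apply HN. lia. Qed.

Theorem picard F L y0 : 0 <= L -> Lip F L ->
  exists y : R -> st, y 0 = y0 /\
   (forall t, 0 < t -> forall i, is_derive (fun s => cs i (y s)) t (F i (y t))) /\
   (forall eps, 0 < eps -> exists d, 0 < d /\ forall t, 0 <= t < d -> forall i, Rabs (cs i (y t) - cs i y0) < eps).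
Proof.
  intros HL HF.
  set (C := Rabs (F I1 y0) + Rabs (F I2 y0) + Rabs (F I3 y0)).
  assert (HC : 0 <= C) by (unfold C; pose proof (Rabs_pos (F I1 y0)); pose proof (Rabs_pos (F I2 y0));
    pose proof (Rabs_pos (F I3 y0)); lra).
  set (Y := fun t => mk3 (fun i => ylim F y0 i t)).
  exists Y. split; [|split].
  - transitivity (mk3 (fun i => cs i y0)); [|apply mk3_cs]. unfold Y, mk3. rewrite !ylim_0. reflexivity.
  - intros t Ht i.
    apply (is_derive_extR (ylim F y0 i)). { intros s; unfold Y; rewrite cs_mk3; reflexivity. }
    set (K := C * (2 * t) * exp (2 * (3 * L) * (2 * t))).
    assert (HK : 0 <= K) by (unfold K; apply Rmult_le_pos; [nra|left; apply exp_pos]).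
    apply is_derive_Reals.
    assert (Hd : 0 < t / 2) by lra.
    apply (CVU_derivable (fun n s => cs i (pic F y0 (S n) s)) (fun n s => F i (pic F y0 n s))
      (ylim F y0 i) (fun s => F i (Y s)) t (mkposreal _ Hd)).
    + intros eps Heps.
      destruct (pow_lt_1_zero (/2) ltac:(rewrite Rabs_pos_eq; lra) (eps / (6 * L * K + 1))) as [N HN].
      { apply Rdiv_lt_0_compat; [lra|]. nra. }
      exists N. intros n s Hn Hs. unfold Boule in Hs; simpl in Hs.
      apply Rabs_def2 in Hs.
      specialize (HN n Hn). rewrite Rabs_pos_eq in HN by (apply pow_le; lra).
      assert (Hq : 0 <= (/2) ^ n) by (apply pow_le; lra).
      eapply Rle_lt_trans. apply HF. unfold nrm. unfold Y. rewrite !cs_mk3.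
      assert (Hs' : 0 <= s <= 2 * t) by lra.
      pose proof (proj2 (ylim_props F L y0 HL HF s (2 * t) Hs' I1) n) as B1.
      pose proof (proj2 (ylim_props F L y0 HL HF s (2 * t) Hs' I2) n) as B2.
      pose proof (proj2 (ylim_props F L y0 HL HF s (2 * t) Hs' I3) n) as B3.
      fold C in B1, B2, B3.
      assert (Hb : C * s * exp (2 * (3 * L) * (2 * t)) <= K).
      { unfold K. apply Rmult_le_compat_r. left; apply exp_pos. apply Rmult_le_compat_l; lra. }
      assert (Hsum : Rabs (ylim F y0 I1 s - cs I1 (pic F y0 n s)) + Rabs (ylim F y0 I2 s - cs I2 (pic F y0 n s))
        + Rabs (ylim F y0 I3 s - cs I3 (pic F y0 n s)) <= 6 * K * (/2) ^ n) by nra.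
      assert (E : (6 * L * K + 1) * (eps / (6 * L * K + 1)) = eps) by (field; nra).
      assert (HLK : 0 <= L * K) by nra.
      assert (L * (Rabs (ylim F y0 I1 s - cs I1 (pic F y0 n s)) + Rabs (ylim F y0 I2 s - cs I2 (pic F y0 n s))
        + Rabs (ylim F y0 I3 s - cs I3 (pic F y0 n s))) <= L * (6 * K * (/2) ^ n)) by (apply Rmult_le_compat_l; lra).
      assert ((6 * L * K + 1) * (/2) ^ n < (6 * L * K + 1) * (eps / (6 * L * K + 1))) by (apply Rmult_lt_compat_l; nra).
      nra.
    + intros s Hs. unfold Boule in Hs; simpl in Hs. apply Rabs_def2 in Hs.
      apply (Un_cv_S (fun n => cs i (pic F y0 n s))). apply (proj1 (ylim_props F L y0 HL HF s (2 * t) ltac:(lra) i)).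
    + intros n s _. apply is_derive_Reals. apply (proj2 (pic_props F L y0 HL HF n)).
    + unfold Boule; simpl. rewrite Rminus_diag, Rabs_R0. lra.
  - intros eps Heps.
    set (E := exp (2 * (3 * L) * 1)).
    assert (HE : 0 < E) by apply exp_pos.
    exists (Rmin 1 (eps / (2 * C * E + 1))). split.
    { apply Rmin_pos; [lra|]. apply Rdiv_lt_0_compat; nra. }
    intros t [Ht0 Ht1] i.
    assert (Ht1a : t < 1) by (eapply Rlt_le_trans; [exact Ht1|apply Rmin_l]).
    assert (Ht1b : t < eps / (2 * C * E + 1)) by (eapply Rlt_le_trans; [exact Ht1|apply Rmin_r]).
    pose proof (proj2 (ylim_props F L y0 HL HF t 1 ltac:(lra) i) 0%nat) as B.
    fold C in B. fold E in B. simpl pic in B. simpl pow in B.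
    unfold Y. rewrite cs_mk3.
    assert (Ee : (2 * C * E + 1) * (eps / (2 * C * E + 1)) = eps) by (field; nra).
    assert ((2 * C * E + 1) * t < eps) by (rewrite <- Ee; apply Rmult_lt_compat_l; nra).
    nra.
Qed.

Definition rc0 (f : R -> R) := forall eps, 0 < eps -> exists d, 0 < d /\ forall t, 0 <= t < d -> Rabs (f t - f 0) < eps.

Lemma first_time (f : R -> R) (t1 c : R) : 0 < t1 ->
  (forall t, 0 < t <= t1 -> continuity_pt f t) -> rc0 f -> f 0 < c -> c <= f t1 ->
  exists t2, 0 < t2 <= t1 /\ f t2 = c /\ forall s, 0 <= s < t2 -> f s < c.
Proof.
  intros Ht1 Hc Hr H0 H1.
  set (E := fun t => 0 <= t <= t1 /\ forall s, 0 <= s <= t -> f s < c).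
  assert (HE0 : E 0) by (split; [lra| intros s Hs; replace s with 0 by lra; auto]).
  destruct (completeness E) as [m [Hub Hlub]].
  { exists t1. intros x [Hx _]. lra. }
  { exists 0; auto. }
  assert (Hm0 : 0 <= m) by (apply Hub; auto).
  assert (Hm1 : m <= t1) by (apply Hlub; intros x [Hx _]; lra).
  assert (Ha : forall s, 0 <= s < m -> f s < c).
  { intros s Hs. destruct (Rlt_dec s m) as [_|]; [|lra].
    destruct (classic (exists t, E t /\ s < t)) as [[t [[_ Ht] Hst]]|Hn].
    - apply Ht; lra.
    - exfalso. assert (m <= s); [|lra]. apply Hlub. intros x Hx.
      apply Rnot_lt_le. intro Hsx. apply Hn. exists x; auto. }
  assert (Hmp : 0 < m).
  { destruct (Hr (c - f 0) ltac:(lra)) as [d [Hd Hd']].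
    assert (E (Rmin (d/2) t1)).
    { split. split; [apply Rmin_glb; lra| apply Rmin_r].
      intros s Hs. assert (s < d) by (pose proof (Rmin_l (d/2) t1); lra).
      specialize (Hd' s ltac:(lra)). apply Rabs_def2 in Hd'. lra. }
    assert (Rmin (d/2) t1 <= m) by (apply Hub; auto).
    assert (0 < Rmin (d/2) t1) by (apply Rmin_pos; lra). lra. }
  assert (Hle : f m <= c).
  { apply Rnot_lt_le. intro Hgt.
    destruct (cpt_elim f m (Hc m ltac:(lra)) (f m - c) ltac:(lra)) as [d [Hd Hd']].
    set (s := m - Rmin d m / 2).
    assert (0 < Rmin d m) by (apply Rmin_pos; lra).
    assert (Rmin d m <= d) by apply Rmin_l. assert (Rmin d m <= m) by apply Rmin_r.
    specialize (Hd' s ltac:(unfold s; rewrite Rabs_left; lra)).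
    specialize (Ha s ltac:(unfold s; lra)). apply Rabs_def2 in Hd'. lra. }
  assert (Hge : c <= f m).
  { apply Rnot_lt_le. intro Hlt.
    destruct (Req_dec m t1) as [->|Hne]; [lra|].
    destruct (cpt_elim f m (Hc m ltac:(lra)) (c - f m) ltac:(lra)) as [d [Hd Hd']].
    assert (E (Rmin (m + d/2) t1)).
    { split. split; [apply Rmin_glb; lra| apply Rmin_r].
      intros s Hs. destruct (Rlt_dec s m) as [Hsm|Hsm]. apply Ha; lra.
      assert (s <= m + d/2) by (pose proof (Rmin_l (m + d/2) t1); lra).
      specialize (Hd' s ltac:(rewrite Rabs_pos_eq; lra)). apply Rabs_def2 in Hd'. lra. }
    assert (Rmin (m + d/2) t1 <= m) by (apply Hub; auto).
    assert (m < Rmin (m + d/2) t1) by (apply Rmin_glb_lt; lra). lra. }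
  exists m. split; [lra|]. split; [lra|]. exact Ha.
Qed.

Lemma barrier (f df : R -> R) (T b : R) :
  (forall t, 0 < t < T -> is_derive f t (df t)) ->
  (forall t, 0 < t < T -> f t < b -> df t <= 0) ->
  rc0 f -> f 0 < b -> forall t, 0 <= t < T -> f t <= f 0.
Proof.
  intros Hd Hs Hr Hb t Ht. apply Rnot_lt_le. intro Hgt.
  destruct (Req_dec t 0) as [->|Htn]; [lra|].
  set (c := f 0 + Rmin (f t - f 0) (b - f 0) / 2).
  assert (Hc1 : f 0 < c) by (unfold c; assert (0 < Rmin (f t - f 0) (b - f 0)) by (apply Rmin_pos; lra); lra).
  assert (Hc2 : c < f t) by (unfold c; pose proof (Rmin_l (f t - f 0) (b - f 0)); lra).
  assert (Hc3 : c < b) by (unfold c; pose proof (Rmin_r (f t - f 0) (b - f 0)); lra).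
  destruct (first_time f t c ltac:(lra)) as [t2 [Ht2 [Hft2 Hbef]]]; auto; try lra.
  { intros s Hs'. eapply der_cpt. apply Hd. lra. }
  assert (Hmm : Rmin (t2/2) t2 = t2/2 /\ Rmax (t2/2) t2 = t2) by (split; [apply Rmin_left|apply Rmax_right]; lra).
  destruct Hmm as [Hmin Hmax].
  destruct (MVT_gen f (t2/2) t2 df) as [c0 [Hc0 Heq]].
  { rewrite Hmin, Hmax. intros x Hx. apply Hd. lra. }
  { rewrite Hmin, Hmax. intros x Hx. eapply der_cpt. apply Hd. lra. }
  rewrite Hmin, Hmax in Hc0.
  assert (Hf2 : f (t2/2) < c) by (apply Hbef; lra).
  assert (Hfc : f c0 < b).
  { destruct (Req_dec c0 t2) as [->|Hne]; [lra|]. assert (f c0 < c) by (apply Hbef; lra). lra. }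
  specialize (Hs c0 ltac:(lra) Hfc).
  assert (df c0 * (t2 - t2/2) <= 0) by (apply Rmult_le_0_r; lra). lra.
Qed.

Lemma s2E : s2 = -477/1000. Proof. unfold s2, Q2R; simpl. lra. Qed.
Lemma BcE : Bc = 19/10. Proof. unfold Bc, Q2R; simpl. lra. Qed.
Lemma a1E : alpha1 = 32/100. Proof. unfold alpha1, Q2R; simpl. lra. Qed.
Lemma a2E : alpha2 = 62/100. Proof. unfold alpha2, Q2R; simpl. lra. Qed.
Lemma DcE : Dc = 35/100. Proof. unfold Dc, Q2R; simpl. lra. Qed.

Definition phi0 (e : R) : R := (Qc*(s0 - alphabar0 e) - Ac)/Bc.
Definition phi2 (e : R) : R := Qc*(s2 - alphabar2 e)/(Bc + 6*Dc).
Definition Hf (e : R) : R := phi0 e + phi2 e * p2 e - Tc.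
Definition Hp (x : R) : R := -151576429/7600000 + 129990483/1216000 * x - 9325827/400000 * x^2
  - 218743791/1216000 * x^3 + 50012487/320000 * x^5 - 13252491/320000 * x^7.
Definition phi0p (x : R) : R := -3583/95 + 2548833/38000 * x - 490833/38000 * x^3.
Definition phi2p (x : R) : R := -3108609/200000 - 2548833/32000 * x + 1519833/16000 * x^3 - 4417497/160000 * x^5.

Ltac unf := unfold Hf, Hp, phi0, phi2, phi0p, phi2p, p2, alphabar0, alphabar2, Iq0, Iq2, Qc, s0, Ac, Tc;
  rewrite ?s2E, ?BcE, ?a1E, ?a2E, ?DcE.
Lemma Hf_eq e : Hf e = Hp e.
Proof. unf. field. Qed.
Lemma phi0_eq e : phi0 e = phi0p e.
Proof. unf. field. Qed.
Lemma phi2_eq e : phi2 e = phi2p e.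
Proof. unf. field. Qed.

Definition dHp (x : R) : R := 129990483/1216000 - 2 * (9325827/400000) * x - 3 * (218743791/1216000) * x^2
  + 5 * (50012487/320000) * x^4 - 7 * (13252491/320000) * x^6.
Definition dphi0p (x : R) : R := 2548833/38000 - 3 * (490833/38000) * x^2.
Definition dphi2p (x : R) : R := - 2548833/32000 + 3 * (1519833/16000) * x^2 - 5 * (4417497/160000) * x^4.

Lemma Hp_der (x : R) : is_derive Hp x (dHp x).
Proof. unfold Hp, dHp. auto_derive; auto. match goal with |- ?a = ?b => change (@eq R a b) end. unfold Rdiv; ring. Qed.
Lemma phi0p_der (x : R) : is_derive phi0p x (dphi0p x).
Proof. unfold phi0p, dphi0p. auto_derive; auto. match goal with |- ?a = ?b => change (@eq R a b) end. unfold Rdiv; ring. Qed.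
Lemma phi2p_der (x : R) : is_derive phi2p x (dphi2p x).
Proof. unfold phi2p, dphi2p. auto_derive; auto. match goal with |- ?a = ?b => change (@eq R a b) end. unfold Rdiv; ring. Qed.

Lemma bern_nn a b x k m : a <= x <= b -> 0 <= (x - a) ^ k * (b - x) ^ m.
Proof. intros. apply Rmult_le_pos; apply pow_le; lra. Qed.

Ltac bern a b x H :=
  pose proof (bern_nn a b x 0 7 H); pose proof (bern_nn a b x 1 6 H);
  pose proof (bern_nn a b x 2 5 H); pose proof (bern_nn a b x 3 4 H);
  pose proof (bern_nn a b x 4 3 H); pose proof (bern_nn a b x 5 2 H);
  pose proof (bern_nn a b x 6 1 H); pose proof (bern_nn a b x 7 0 H).

Lemma Hp_neg1 x : 0 <= x <= 19/100 -> Hp x < 0.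
Proof. intro H. bern 0 (19/100) x H. unfold Hp. simpl in *. lra. Qed.
Lemma Hp_pos x : 23/100 <= x <= 82/100 -> 0 < Hp x.
Proof. intro H. bern (23/100) (82/100) x H. unfold Hp. simpl in *. lra. Qed.
Lemma Hp_neg2 x : 86/100 <= x <= 1 -> Hp x < 0.
Proof. intro H. bern (86/100) 1 x H. unfold Hp. simpl in *. lra. Qed.
Lemma dHp_1 x : 19/100 <= x <= 23/100 -> 50 <= dHp x.
Proof. intro H. bern (19/100) (23/100) x H. unfold dHp. simpl in *. lra. Qed.
Lemma dHp_2 x : 82/100 <= x <= 86/100 -> dHp x <= -15.
Proof. intro H. bern (82/100) (86/100) x H. unfold dHp. simpl in *. lra. Qed.
Lemma dHp_bd x : 0 <= x <= 1 -> Rabs (dHp x) <= 200.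
Proof. intro H. bern 0 1 x H. apply Rabs_le. unfold dHp. simpl in *. split; lra. Qed.
Lemma dphi0p_bd x : 0 <= x <= 1 -> Rabs (dphi0p x) <= 200.
Proof. intro H. bern 0 1 x H. apply Rabs_le. unfold dphi0p. simpl in *. split; lra. Qed.
Lemma dphi2p_bd x : 0 <= x <= 1 -> Rabs (dphi2p x) <= 200.
Proof. intro H. bern 0 1 x H. apply Rabs_le. unfold dphi2p. simpl in *. split; lra. Qed.
Lemma phi2p_bd x : 0 <= x <= 1 -> Rabs (phi2p x) <= 60.
Proof. intro H. bern 0 1 x H. apply Rabs_le. unfold phi2p. simpl in *. split; lra. Qed.
Lemma p2_bd x : 0 <= x <= 1 -> Rabs (p2 x) <= 1.
Proof. intro H. apply Rabs_le. unfold p2. split; nra. Qed.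

Lemma mvt_in (f df : R -> R) a b x y :
  (forall z, a <= z <= b -> is_derive f z (df z)) -> a <= x <= b -> a <= y <= b ->
  exists c, a <= c <= b /\ f y - f x = df c * (y - x).
Proof.
  intros Hd Hx Hy.
  assert (H1 : a <= Rmin x y) by (apply Rmin_glb; lra).
  assert (H2 : Rmax x y <= b) by (apply Rmax_lub; lra).
  destruct (MVT_gen f x y df) as [c [Hc Heq]].
  - intros z Hz. apply Hd. lra.
  - intros z Hz. eapply der_cpt. apply Hd. lra.
  - exists c. split; [lra|exact Heq].
Qed.

Lemma cont_Hp : continuity Hp.
Proof. intro x. eapply der_cpt. apply Hp_der. Qed.

Lemma root1_ex : exists e, 19/100 < e < 23/100 /\ Hp e = 0.
Proof.
  pose proof (Hp_neg1 (19/100) ltac:(lra)). pose proof (Hp_pos (23/100) ltac:(lra)).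
  destruct (IVT_gen Hp (19/100) (23/100) 0 cont_Hp) as [e [He He0]].
  { rewrite Rmin_left, Rmax_right; lra. }
  rewrite Rmin_left, Rmax_right in He by lra.
  exists e. split; auto. split; apply Rnot_ge_lt; intro; [assert (e = 19/100) by lra|assert (e = 23/100) by lra]; subst; lra.
Qed.

Lemma root2_ex : exists e, 82/100 < e < 86/100 /\ Hp e = 0.
Proof.
  pose proof (Hp_pos (82/100) ltac:(lra)). pose proof (Hp_neg2 (86/100) ltac:(lra)).
  destruct (IVT_gen Hp (82/100) (86/100) 0 cont_Hp) as [e [He He0]].
  { rewrite Rmin_right, Rmax_left; lra. }
  rewrite Rmin_left, Rmax_right in He by lra.
  exists e. split; auto. split; apply Rnot_ge_lt; intro; [assert (e = 82/100) by lra|assert (e = 86/100) by lra]; subst; lra.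
Qed.

Lemma loc1 e1 : 19/100 < e1 < 23/100 -> Hp e1 = 0 ->
  forall e, 19/100 <= e <= 23/100 -> 50 * (e - e1)^2 <= (e - e1) * Hp e.
Proof.
  intros H1 H0 e He. destruct (mvt_in Hp dHp (19/100) (23/100) e1 e) as [c [Hc Heq]]; try lra.
  { intros; apply Hp_der. }
  rewrite H0, Rminus_0_r in Heq. rewrite Heq. pose proof (dHp_1 c Hc).
  assert (0 <= (e - e1)^2) by (apply pow2_ge_0). nra.
Qed.

Lemma loc2 e2 : 82/100 < e2 < 86/100 -> Hp e2 = 0 ->
  forall e, 82/100 <= e <= 86/100 -> (e - e2) * Hp e <= -15 * (e - e2)^2.
Proof.
  intros H1 H0 e He. destruct (mvt_in Hp dHp (82/100) (86/100) e2 e) as [c [Hc Heq]]; try lra.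
  { intros; apply Hp_der. }
  rewrite H0, Rminus_0_r in Heq. rewrite Heq. pose proof (dHp_2 c Hc).
  assert (0 <= (e - e2)^2) by (apply pow2_ge_0). nra.
Qed.

Lemma lip01 (f df : R -> R) K : (forall z, 0 <= z <= 1 -> is_derive f z (df z)) ->
  (forall z, 0 <= z <= 1 -> Rabs (df z) <= K) ->
  forall x y, 0 <= x <= 1 -> 0 <= y <= 1 -> Rabs (f x - f y) <= K * Rabs (x - y).
Proof.
  intros Hd Hb x y Hx Hy. destruct (mvt_in f df 0 1 y x Hd Hy Hx) as [c [Hc Heq]].
  rewrite Heq, Rabs_mult. apply Rmult_le_compat_r. apply Rabs_pos. apply Hb; auto.
Qed.

Lemma Hp_lip x y : 0 <= x <= 1 -> 0 <= y <= 1 -> Rabs (Hp x - Hp y) <= 200 * Rabs (x - y).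
Proof. apply (lip01 Hp dHp). intros; apply Hp_der. apply dHp_bd. Qed.
Lemma phi0p_lip x y : 0 <= x <= 1 -> 0 <= y <= 1 -> Rabs (phi0p x - phi0p y) <= 200 * Rabs (x - y).
Proof. apply (lip01 phi0p dphi0p). intros; apply phi0p_der. apply dphi0p_bd. Qed.
Lemma phi2p_lip x y : 0 <= x <= 1 -> 0 <= y <= 1 -> Rabs (phi2p x - phi2p y) <= 200 * Rabs (x - y).
Proof. apply (lip01 phi2p dphi2p). intros; apply phi2p_der. apply dphi2p_bd. Qed.
Lemma p2_lip x y : 0 <= x <= 1 -> 0 <= y <= 1 -> Rabs (p2 x - p2 y) <= 3 * Rabs (x - y).
Proof.
  intros Hx Hy. replace (p2 x - p2 y) with (3/2 * (x + y) * (x - y)) by (unfold p2; field).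
  rewrite Rabs_mult. apply Rmult_le_compat_r. apply Rabs_pos.
  rewrite Rabs_pos_eq; lra.
Qed.

Lemma uniq_roots e1 e2 : 19/100 < e1 < 23/100 -> Hp e1 = 0 -> 82/100 < e2 < 86/100 -> Hp e2 = 0 ->
  forall z, 0 <= z <= 1 -> Hp z = 0 -> z = e1 \/ z = e2.
Proof.
  intros H1 H10 H2 H20 z Hz Hz0.
  destruct (Rlt_le_dec z (19/100)). { pose proof (Hp_neg1 z ltac:(lra)); lra. }
  destruct (Rle_lt_dec z (23/100)).
  { left. pose proof (loc1 e1 H1 H10 z ltac:(lra)). rewrite Hz0, Rmult_0_r in H.
    assert ((z - e1)^2 = 0) by (pose proof (pow2_ge_0 (z - e1)); lra).
    simpl in H0. rewrite Rmult_1_r in H0. apply Rmult_integral in H0. lra. }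
  destruct (Rlt_le_dec z (82/100)). { pose proof (Hp_pos z ltac:(lra)); lra. }
  destruct (Rle_lt_dec z (86/100)).
  { right. pose proof (loc2 e2 H2 H20 z ltac:(lra)). rewrite Hz0, Rmult_0_r in H.
    assert ((z - e2)^2 = 0) by (pose proof (pow2_ge_0 (z - e2)); lra).
    simpl in H0. rewrite Rmult_1_r in H0. apply Rmult_integral in H0. lra. }
  pose proof (Hp_neg2 z ltac:(lra)); lra.
Qed.

Definition Cc : R := (1 + 200 * 200) ^ 2 / 15 + 400.
Lemma Cc_pos : 0 < Cc.
Proof. unfold Cc. simpl. lra. Qed.

Lemma core_bound u0 u2 w hv pv d0 d2 :
  Rabs hv <= 200 * Rabs w -> Rabs pv <= 1 -> Rabs d0 <= 200 -> Rabs d2 <= 200 ->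
  Rabs (w * (u0 + u2 * pv)) + Rabs ((hv + u0 + u2 * pv) * (d0 * u0 + d2 * u2))
    <= 15/2 * w^2 + Cc * (u0^2 + u2^2).
Proof.
  intros Hh Hp Hd0 Hd2.
  set (a := Rabs u0). set (b := Rabs u2). set (z := Rabs w).
  assert (Ha : 0 <= a) by apply Rabs_pos. assert (Hb : 0 <= b) by apply Rabs_pos.
  assert (Hz : 0 <= z) by apply Rabs_pos.
  assert (Hub : Rabs (u2 * pv) <= b) by (rewrite Rabs_mult; unfold b; pose proof (Rabs_pos pv); pose proof (Rabs_pos u2); nra).
  assert (H1 : Rabs (w * (u0 + u2 * pv)) <= z * (a + b)).
  { rewrite Rabs_mult. apply Rmult_le_compat_l; [apply Rabs_pos|].
    eapply Rle_trans; [apply Rabs_triang|]. unfold a; lra. }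
  assert (Hg : Rabs (hv + u0 + u2 * pv) <= 200 * z + a + b).
  { eapply Rle_trans; [apply Rabs_triang|]. eapply Rle_trans; [apply Rplus_le_compat_r; apply Rabs_triang|].
    unfold a, z in *; lra. }
  assert (Hd : Rabs (d0 * u0 + d2 * u2) <= 200 * (a + b)).
  { eapply Rle_trans; [apply Rabs_triang|]. rewrite !Rabs_mult.
    pose proof (Rabs_pos d0). pose proof (Rabs_pos d2). unfold a, b in *. nra. }
  assert (H2 : Rabs ((hv + u0 + u2 * pv) * (d0 * u0 + d2 * u2)) <= (200 * z + a + b) * (200 * (a + b))).
  { rewrite Rabs_mult. apply Rmult_le_compat; auto using Rabs_pos. }
  assert (Ea : a^2 = u0^2) by (unfold a; rewrite RPow_abs, Rabs_pos_eq; [reflexivity| apply pow2_ge_0]).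
  assert (Eb : b^2 = u2^2) by (unfold b; rewrite RPow_abs, Rabs_pos_eq; [reflexivity| apply pow2_ge_0]).
  assert (Ez : z^2 = w^2) by (unfold z; rewrite RPow_abs, Rabs_pos_eq; [reflexivity| apply pow2_ge_0]).
  rewrite <- Ea, <- Eb, <- Ez.
  assert (S1 : 0 <= (z - 40001/15 * (a + b))^2) by apply pow2_ge_0.
  assert (S2 : 0 <= (a - b)^2) by apply pow2_ge_0.
  unfold Cc. simpl in *. nra.
Qed.

Lemma stab_ineq Rr eps u0 u2 w hv pv d0 d2 :
  0 < Rr -> 0 < eps -> eps * Cc * (2 * Rr) <= 1 ->
  w * hv <= -15 * w^2 -> Rabs hv <= 200 * Rabs w -> Rabs pv <= 1 -> Rabs d0 <= 200 -> Rabs d2 <= 200 ->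
  2 * u0 * (Bc * (- u0) / Rr - d0 * (eps * (hv + u0 + u2 * pv)))
  + 2 * u2 * (4 * (- u2) / Rr - d2 * (eps * (hv + u0 + u2 * pv)))
  + 2 * w * (eps * (hv + u0 + u2 * pv))
  <= - (2 / Rr) * (u0^2 + u2^2) - 15 * eps * w^2.
Proof.
  intros HR He HC Hw Hh Hp Hd0 Hd2.
  pose proof (core_bound u0 u2 w hv pv d0 d2 Hh Hp Hd0 Hd2) as Hc.
  pose proof (Rle_abs (w * (u0 + u2 * pv))).
  pose proof (Rle_abs (- ((hv + u0 + u2 * pv) * (d0 * u0 + d2 * u2)))). rewrite Rabs_Ropp in H0.
  rewrite BcE.
  assert (HCR : eps * Cc <= 1 / (2 * Rr)) by (apply (Rmult_le_reg_r (2 * Rr)); [lra|]; field_simplify; lra).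
  assert (E1 : 2 * u0 * (19/10 * - u0 / Rr - d0 * (eps * (hv + u0 + u2 * pv)))
    + 2 * u2 * (4 * - u2 / Rr - d2 * (eps * (hv + u0 + u2 * pv)))
    + 2 * w * (eps * (hv + u0 + u2 * pv)) =
    - (19/5) * (u0^2 / Rr) - 8 * (u2^2 / Rr) + 2 * eps * (w * hv)
    + 2 * eps * (w * (u0 + u2 * pv)) + 2 * eps * (- ((hv + u0 + u2 * pv) * (d0 * u0 + d2 * u2)))) by (field; lra).
  rewrite E1.
  assert (X : eps * (Cc * (u0^2 + u2^2)) <= (u0^2 + u2^2) / (2 * Rr)).
  { pose proof (pow2_ge_0 u0). pose proof (pow2_ge_0 u2).
    replace ((u0^2 + u2^2) / (2 * Rr)) with ((1 / (2 * Rr)) * (u0^2 + u2^2)) by (field; lra).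
    rewrite <- Rmult_assoc. apply Rmult_le_compat_r; lra. }
  assert (Y : - (2 / Rr) * (u0^2 + u2^2) = -2 * (u0^2/Rr) - 2 * (u2^2/Rr)) by (field; lra).
  assert (Z : (u0^2 + u2^2) / (2 * Rr) = /2 * (u0^2/Rr) + /2 * (u2^2/Rr)) by (field; lra).
  assert (P1 : 0 <= u0^2 / Rr) by (apply Rdiv_le_0_compat; [apply pow2_ge_0|lra]).
  assert (P2 : 0 <= u2^2 / Rr) by (apply Rdiv_le_0_compat; [apply pow2_ge_0|lra]).
  nra.
Qed.

Lemma inst_ineq Rr eps u0 u2 w hv pv d0 d2 :
  0 < Rr -> 0 < eps -> eps * Cc * (2 * Rr) <= 1 ->
  50 * w^2 <= w * hv -> Rabs hv <= 200 * Rabs w -> Rabs pv <= 1 -> Rabs d0 <= 200 -> Rabs d2 <= 200 ->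
  85 * eps * w^2 <=
  2 * w * (eps * (hv + u0 + u2 * pv))
  - 2 * u0 * (Bc * (- u0) / Rr - d0 * (eps * (hv + u0 + u2 * pv)))
  - 2 * u2 * (4 * (- u2) / Rr - d2 * (eps * (hv + u0 + u2 * pv))).
Proof.
  intros HR He HC Hw Hh Hp Hd0 Hd2.
  pose proof (core_bound u0 u2 w hv pv d0 d2 Hh Hp Hd0 Hd2) as Hc.
  pose proof (Rle_abs (- (w * (u0 + u2 * pv)))). rewrite Rabs_Ropp in H.
  pose proof (Rle_abs (- ((hv + u0 + u2 * pv) * (d0 * u0 + d2 * u2)))). rewrite Rabs_Ropp in H0.
  rewrite BcE.
  assert (HCR : eps * Cc <= 1 / (2 * Rr)) by (apply (Rmult_le_reg_r (2 * Rr)); [lra|]; field_simplify; lra).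
  assert (E1 : 2 * w * (eps * (hv + u0 + u2 * pv))
    - 2 * u0 * (19/10 * - u0 / Rr - d0 * (eps * (hv + u0 + u2 * pv)))
    - 2 * u2 * (4 * - u2 / Rr - d2 * (eps * (hv + u0 + u2 * pv))) =
    (19/5) * (u0^2 / Rr) + 8 * (u2^2 / Rr) + 2 * eps * (w * hv)
    - 2 * eps * (- (w * (u0 + u2 * pv))) + 2 * eps * ((hv + u0 + u2 * pv) * (d0 * u0 + d2 * u2))) by (field; lra).
  rewrite E1.
  assert (X : eps * (Cc * (u0^2 + u2^2)) <= (u0^2 + u2^2) / (2 * Rr)).
  { pose proof (pow2_ge_0 u0). pose proof (pow2_ge_0 u2).
    replace ((u0^2 + u2^2) / (2 * Rr)) with ((1 / (2 * Rr)) * (u0^2 + u2^2)) by (field; lra).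
    rewrite <- Rmult_assoc. apply Rmult_le_compat_r; lra. }
  assert (Z : (u0^2 + u2^2) / (2 * Rr) = /2 * (u0^2/Rr) + /2 * (u2^2/Rr)) by (field; lra).
  assert (P1 : 0 <= u0^2 / Rr) by (apply Rdiv_le_0_compat; [apply pow2_ge_0|lra]).
  assert (P2 : 0 <= u2^2 / Rr) by (apply Rdiv_le_0_compat; [apply pow2_ge_0|lra]).
  nra.
Qed.

Lemma dR_plus (f g : R -> R) (t a b : R) : is_derive f t a -> is_derive g t b -> is_derive (fun s => f s + g s) t (a + b).
Proof. intros H1 H2. exact (is_derive_plus f g t a b H1 H2). Qed.
Lemma dR_minus (f g : R -> R) (t a b : R) : is_derive f t a -> is_derive g t b -> is_derive (fun s => f s - g s) t (a - b).
Proof. intros H1 H2. exact (is_derive_minus f g t a b H1 H2). Qed.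
Lemma dR_mult (f g : R -> R) (t a b : R) : is_derive f t a -> is_derive g t b -> is_derive (fun s => f s * g s) t (a * g t + f t * b).
Proof. intros H1 H2. exact (is_derive_mult f g t a b H1 H2 Rmult_comm). Qed.
Lemma dR_eq (f : R -> R) (t a b : R) : is_derive f t a -> a = b -> is_derive f t b.
Proof. intros H ->; exact H. Qed.
Lemma dR_sq (f : R -> R) (t a : R) : is_derive f t a -> is_derive (fun s => (f s)^2) t (2 * f t * a).
Proof.
  intros H. apply (is_derive_extR (fun s => f s * f s)). { intros; simpl; ring. }
  apply (dR_eq _ _ (a * f t + f t * a)). apply (dR_mult f f t a a H H). ring.
Qed.
Lemma dR_comp (g f : R -> R) (t dg df : R) : is_derive g (f t) dg -> is_derive f t df -> is_derive (fun s => g (f s)) t (dg * df).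
Proof. intros H1 H2. eapply dR_eq. exact (is_derive_comp g f t dg df H1 H2). simpl. unfold scal; simpl; unfold mult; simpl. ring. Qed.
Lemma dR_const (c t : R) : is_derive (fun _ => c) t 0.
Proof. exact (is_derive_Rconst c t). Qed.
Lemma dR_id (t : R) : is_derive (fun s => s) t 1.
Proof. exact (is_derive_id (K:=R_AbsRing) t). Qed.
Lemma dR_exp (k t : R) : is_derive (fun s => exp (k * s)) t (exp (k * t) * k).
Proof. eapply dR_eq. apply (dR_comp exp (fun s => k * s)). apply is_derive_exp. auto_derive; auto. ring. Qed.

Definition Vexp (T0 T2 e es : R) := (T0 - phi0p e)^2 + (T2 - phi2p e)^2 + (e - es)^2.
Definition Pexp (T0 T2 e es : R) := (e - es)^2 - ((T0 - phi0p e)^2 + (T2 - phi2p e)^2).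

Lemma comp_ders (T0f T2f ef : R -> R) (es t a b c : R) :
  is_derive T0f t a -> is_derive T2f t b -> is_derive ef t c ->
  is_derive (fun s => (T0f s - phi0p (ef s))^2) t (2 * (T0f t - phi0p (ef t)) * (a - dphi0p (ef t) * c)) /\
  is_derive (fun s => (T2f s - phi2p (ef s))^2) t (2 * (T2f t - phi2p (ef t)) * (b - dphi2p (ef t) * c)) /\
  is_derive (fun s => (ef s - es)^2) t (2 * (ef t - es) * c).
Proof.
  intros H0 H2 He.
  pose proof (dR_minus T0f (fun s => phi0p (ef s)) t _ _ H0 (dR_comp phi0p ef t _ _ (phi0p_der _) He)) as D0.
  pose proof (dR_minus T2f (fun s => phi2p (ef s)) t _ _ H2 (dR_comp phi2p ef t _ _ (phi2p_der _) He)) as D2.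
  pose proof (dR_minus ef (fun _ => es) t _ _ He (dR_const es t)) as De.
  split; [|split].
  - exact (dR_sq _ _ _ D0).
  - exact (dR_sq _ _ _ D2).
  - eapply dR_eq. exact (dR_sq _ _ _ De). simpl. ring.
Qed.

Lemma V_der (T0f T2f ef : R -> R) (es t a b c : R) :
  is_derive T0f t a -> is_derive T2f t b -> is_derive ef t c ->
  is_derive (fun s => Vexp (T0f s) (T2f s) (ef s) es) t
   (2 * (T0f t - phi0p (ef t)) * (a - dphi0p (ef t) * c) + 2 * (T2f t - phi2p (ef t)) * (b - dphi2p (ef t) * c)
    + 2 * (ef t - es) * c).
Proof.
  intros H0 H2 He. destruct (comp_ders T0f T2f ef es t a b c H0 H2 He) as [D0 [D2 De]].
  unfold Vexp. apply (dR_plus (fun s => (T0f s - phi0p (ef s))^2 + (T2f s - phi2p (ef s))^2) (fun s => (ef s - es)^2)); auto.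
  apply (dR_plus (fun s => (T0f s - phi0p (ef s))^2) (fun s => (T2f s - phi2p (ef s))^2)); auto.
Qed.

Lemma P_der (T0f T2f ef : R -> R) (es t a b c : R) :
  is_derive T0f t a -> is_derive T2f t b -> is_derive ef t c ->
  is_derive (fun s => Pexp (T0f s) (T2f s) (ef s) es) t
   (2 * (ef t - es) * c - 2 * (T0f t - phi0p (ef t)) * (a - dphi0p (ef t) * c) - 2 * (T2f t - phi2p (ef t)) * (b - dphi2p (ef t) * c)).
Proof.
  intros H0 H2 He. destruct (comp_ders T0f T2f ef es t a b c H0 H2 He) as [D0 [D2 De]].
  unfold Pexp.
  apply (dR_eq _ _ (2 * (ef t - es) * c - (2 * (T0f t - phi0p (ef t)) * (a - dphi0p (ef t) * c) + 2 * (T2f t - phi2p (ef t)) * (b - dphi2p (ef t) * c)))); [|ring].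
  apply (dR_minus (fun s => (ef s - es)^2) (fun s => (T0f s - phi0p (ef s))^2 + (T2f s - phi2p (ef s))^2)); auto.
  apply (dR_plus (fun s => (T0f s - phi0p (ef s))^2) (fun s => (T2f s - phi2p (ef s))^2)); auto.
Qed.

Lemma W_der (g : R -> R) (k t dg : R) : is_derive g t dg ->
  is_derive (fun s => exp (k * s) * g s) t (exp (k * t) * (k * g t + dg)).
Proof.
  intro H. apply (dR_eq _ _ (exp (k * t) * k * g t + exp (k * t) * dg)); [|ring].
  apply (dR_mult (fun s => exp (k * s)) g). apply dR_exp. exact H.
Qed.

Definition ext (g : R -> R) := fun t => if Rle_dec 0 t then g t else g 0.

Lemma rc0_ext g : rc0 g -> continuity_pt (ext g) 0.
Proof.
  intros H. apply cpt_intro. intros eps Heps. destruct (H eps Heps) as [d [Hd Hd']].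
  exists d. split; auto. intros y Hy. unfold ext.
  destruct (Rle_dec 0 0) as [_|]; [|lra].
  destruct (Rle_dec 0 y).
  - apply Hd'. split; auto. rewrite Rminus_0_r in Hy. apply Rabs_def2 in Hy. lra.
  - rewrite Rminus_diag, Rabs_R0. lra.
Qed.

Lemma ext_rc0 g G : continuity_pt G 0 -> (forall t, 0 <= t -> G t = g t) -> rc0 g.
Proof.
  intros H E eps Heps. destruct (cpt_elim G 0 H eps Heps) as [d [Hd Hd']].
  exists d. split; auto. intros t Ht. rewrite <- (E t), <- (E 0) by lra. apply Hd'.
  rewrite Rminus_0_r, Rabs_pos_eq; lra.
Qed.

Lemma rc0_eq f g : rc0 f -> (forall t, 0 <= t -> f t = g t) -> rc0 g.
Proof. intros H E. apply (ext_rc0 g (ext f)). apply rc0_ext; auto.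
  intros t Ht. unfold ext. destruct (Rle_dec 0 t); [|lra]. auto. Qed.

Lemma rc0_plus f g : rc0 f -> rc0 g -> rc0 (fun t => f t + g t).
Proof.
  intros Hf Hg. apply (ext_rc0 _ (plus_fct (ext f) (ext g))).
  apply continuity_pt_plus; apply rc0_ext; auto.
  intros t Ht. unfold plus_fct, ext. destruct (Rle_dec 0 t); [auto|lra].
Qed.
Lemma rc0_minus f g : rc0 f -> rc0 g -> rc0 (fun t => f t - g t).
Proof.
  intros Hf Hg. apply (ext_rc0 _ (minus_fct (ext f) (ext g))).
  apply continuity_pt_minus; apply rc0_ext; auto.
  intros t Ht. unfold minus_fct, ext. destruct (Rle_dec 0 t); [auto|lra].
Qed.
Lemma rc0_mult f g : rc0 f -> rc0 g -> rc0 (fun t => f t * g t).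
Proof.
  intros Hf Hg. apply (ext_rc0 _ (mult_fct (ext f) (ext g))).
  apply continuity_pt_mult; apply rc0_ext; auto.
  intros t Ht. unfold mult_fct, ext. destruct (Rle_dec 0 t); [auto|lra].
Qed.
Lemma rc0_comp (h g : R -> R) : continuity_pt h (g 0) -> rc0 g -> rc0 (fun t => h (g t)).
Proof.
  intros Hh Hg. apply (ext_rc0 _ (comp h (ext g))).
  apply continuity_pt_comp. apply rc0_ext; auto. unfold ext. destruct (Rle_dec 0 0); [auto|lra].
  intros t Ht. unfold comp, ext. destruct (Rle_dec 0 t); [auto|lra].
Qed.
Lemma rc0_cst c : rc0 (fun _ => c).
Proof. intros eps He. exists 1. split; [lra|]. intros. rewrite Rminus_diag, Rabs_R0; lra. Qed.
Lemma rc0_sq f : rc0 f -> rc0 (fun t => (f t)^2).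
Proof. intro H. apply (rc0_eq (fun t => f t * f t)). apply rc0_mult; auto. intros; simpl; ring. Qed.
Lemma rc0_expk k : rc0 (fun t => exp (k * t)).
Proof. apply (ext_rc0 _ (fun t => exp (k * t))). eapply der_cpt. apply dR_exp. auto. Qed.

Lemma rc0_V T0f T2f ef es : rc0 T0f -> rc0 T2f -> rc0 ef -> rc0 (fun t => Vexp (T0f t) (T2f t) (ef t) es).
Proof.
  intros H0 H2 He. unfold Vexp.
  apply rc0_plus; [apply rc0_plus|]; apply rc0_sq; apply rc0_minus; auto; try apply rc0_cst.
  apply (rc0_comp phi0p ef); auto. eapply der_cpt; apply phi0p_der.
  apply (rc0_comp phi2p ef); auto. eapply der_cpt; apply phi2p_der.
Qed.
Lemma rc0_P T0f T2f ef es : rc0 T0f -> rc0 T2f -> rc0 ef -> rc0 (fun t => Pexp (T0f t) (T2f t) (ef t) es).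
Proof.
  intros H0 H2 He. unfold Pexp.
  apply rc0_minus; [|apply rc0_plus]; apply rc0_sq; apply rc0_minus; auto; try apply rc0_cst.
  apply (rc0_comp phi0p ef); auto. eapply der_cpt; apply phi0p_der.
  apply (rc0_comp phi2p ef); auto. eapply der_cpt; apply phi2p_der.
Qed.

Lemma rhsT0_eq Rr x : Rr <> 0 -> rhs_T0 Rr x = Bc * (- (T0_of x - phi0p (eta_of x))) / Rr.
Proof. intros. unfold rhs_T0. rewrite <- phi0_eq. unfold phi0. rewrite BcE. field. lra. Qed.
Lemma rhsT2_eq Rr x : Rr <> 0 -> rhs_T2 Rr x = 4 * (- (T2_of x - phi2p (eta_of x))) / Rr.
Proof. intros. unfold rhs_T2. rewrite <- phi2_eq. unfold phi2. rewrite BcE, DcE. field. lra. Qed.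
Lemma rhseta_eq eps x : rhs_eta eps x =
  eps * (Hp (eta_of x) + (T0_of x - phi0p (eta_of x)) + (T2_of x - phi2p (eta_of x)) * p2 (eta_of x)).
Proof. unfold rhs_eta. rewrite <- Hf_eq, <- phi0_eq, <- phi2_eq. unfold Hf. ring. Qed.

Definition eqp (e : R) : state := (phi0p e, phi2p e, e).

Lemma equil_char Rr eps x : 0 < Rr -> 0 < eps ->
  is_equilibrium Rr eps x <-> (T0_of x = phi0p (eta_of x) /\ T2_of x = phi2p (eta_of x) /\ Hp (eta_of x) = 0).
Proof.
  intros HR He. unfold is_equilibrium. rewrite rhsT0_eq, rhsT2_eq, rhseta_eq by lra. rewrite BcE.
  split.
  - intros [H1 [H2 H3]].
    assert (E1 : T0_of x - phi0p (eta_of x) = 0).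
    { apply (Rmult_eq_compat_r (Rr * 10 / 19)) in H1. field_simplify in H1; [|lra]. lra. }
    assert (E2 : T2_of x - phi2p (eta_of x) = 0).
    { apply (Rmult_eq_compat_r (Rr / 4)) in H2. field_simplify in H2; [|lra]. lra. }
    rewrite E1, E2 in H3. split; [lra|split; [lra|]].
    apply (Rmult_eq_compat_l (/ eps)) in H3. rewrite <- Rmult_assoc, Rinv_l, Rmult_0_r in H3 by lra. lra.
  - intros [H1 [H2 H3]]. rewrite H1, H2, H3. split; [|split]; field; lra.
Qed.

Lemma eqp_equil Rr eps e : 0 < Rr -> 0 < eps -> Hp e = 0 -> is_equilibrium Rr eps (eqp e).
Proof. intros. apply equil_char; auto. Qed.

Lemma dist3_lt x y d : dist3 x y < d ->
  Rabs (T0_of x - T0_of y) < d /\ Rabs (T2_of x - T2_of y) < d /\ Rabs (eta_of x - eta_of y) < d.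
Proof.
  unfold dist3. intros H.
  pose proof (Rmax_l (Rabs (T0_of x - T0_of y)) (Rmax (Rabs (T2_of x - T2_of y)) (Rabs (eta_of x - eta_of y)))).
  pose proof (Rmax_r (Rabs (T0_of x - T0_of y)) (Rmax (Rabs (T2_of x - T2_of y)) (Rabs (eta_of x - eta_of y)))).
  pose proof (Rmax_l (Rabs (T2_of x - T2_of y)) (Rabs (eta_of x - eta_of y))).
  pose proof (Rmax_r (Rabs (T2_of x - T2_of y)) (Rabs (eta_of x - eta_of y))). lra.
Qed.

Lemma lt_dist3 x y d :
  Rabs (T0_of x - T0_of y) < d -> Rabs (T2_of x - T2_of y) < d -> Rabs (eta_of x - eta_of y) < d -> dist3 x y < d.
Proof. intros. unfold dist3. apply Rmax_lub_lt; auto. apply Rmax_lub_lt; auto. Qed.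

Lemma dist3_ge_eta x y : Rabs (eta_of x - eta_of y) <= dist3 x y.
Proof. unfold dist3. eapply Rle_trans; [|apply Rmax_r]. apply Rmax_r. Qed.

Lemma sq_lt a r : 0 <= r -> a^2 < r^2 -> Rabs a < r.
Proof. intros Hr H. apply Rabs_def1; nra. Qed.

Lemma V_to_dist x es r : 1/10 <= es <= 9/10 -> 0 < r <= 1/10 ->
  Vexp (T0_of x) (T2_of x) (eta_of x) es < r^2 -> dist3 x (eqp es) < 201 * r /\ Rabs (eta_of x - es) < r.
Proof.
  unfold Vexp. intros Hes Hr HV.
  pose proof (pow2_ge_0 (T0_of x - phi0p (eta_of x))). pose proof (pow2_ge_0 (T2_of x - phi2p (eta_of x))).
  pose proof (pow2_ge_0 (eta_of x - es)).
  assert (A0 : Rabs (T0_of x - phi0p (eta_of x)) < r) by (apply sq_lt; lra).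
  assert (A2 : Rabs (T2_of x - phi2p (eta_of x)) < r) by (apply sq_lt; lra).
  assert (Ae : Rabs (eta_of x - es) < r) by (apply sq_lt; lra).
  apply Rabs_def2 in Ae as Ae'.
  assert (Hin : 0 <= eta_of x <= 1) by lra.
  pose proof (phi0p_lip (eta_of x) es Hin ltac:(lra)). pose proof (phi2p_lip (eta_of x) es Hin ltac:(lra)).
  split; [|exact Ae]. unfold eqp. apply lt_dist3; unfold T0_of, T2_of, eta_of in *; simpl.
  - replace (fst (fst x) - phi0p es) with ((fst (fst x) - phi0p (snd x)) + (phi0p (snd x) - phi0p es)) by ring.
    eapply Rle_lt_trans. apply Rabs_triang. lra.
  - replace (snd (fst x) - phi2p es) with ((snd (fst x) - phi2p (snd x)) + (phi2p (snd x) - phi2p es)) by ring.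
    eapply Rle_lt_trans. apply Rabs_triang. lra.
  - lra.
Qed.

Lemma dist_to_V x es d : 1/10 <= es <= 9/10 -> 0 < d <= 1/10 ->
  dist3 x (eqp es) < d -> Vexp (T0_of x) (T2_of x) (eta_of x) es < (400 * d)^2.
Proof.
  intros Hes Hd H. apply dist3_lt in H. destruct H as [H0 [H2 He]].
  unfold eqp, T0_of, T2_of, eta_of in *; simpl in *. unfold Vexp, T0_of, T2_of, eta_of.
  apply Rabs_def2 in He as He'.
  assert (Hin : 0 <= snd x <= 1) by lra.
  pose proof (phi0p_lip (snd x) es Hin ltac:(lra)). pose proof (phi2p_lip (snd x) es Hin ltac:(lra)).
  assert (B0 : Rabs (fst (fst x) - phi0p (snd x)) < 201 * d).
  { replace (fst (fst x) - phi0p (snd x)) with ((fst (fst x) - phi0p es) - (phi0p (snd x) - phi0p es)) by ring.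
    eapply Rle_lt_trans. apply abs_sub_le. lra. }
  assert (B2 : Rabs (snd (fst x) - phi2p (snd x)) < 201 * d).
  { replace (snd (fst x) - phi2p (snd x)) with ((snd (fst x) - phi2p es) - (phi2p (snd x) - phi2p es)) by ring.
    eapply Rle_lt_trans. apply abs_sub_le. lra. }
  assert (Hsq : forall a b, Rabs a < b -> a^2 < b^2).
  { intros a b Hab. rewrite <- (Rsqr_pow2 a), <- (Rsqr_pow2 b). rewrite Rsqr_abs. apply Rsqr_lt_abs_1.
    rewrite (Rabs_pos_eq b); [|pose proof (Rabs_pos a); lra]. rewrite Rabs_Rabsolu. exact Hab. }
  apply Hsq in B0. apply Hsq in B2. apply Hsq in He. nra.
Qed.

Lemma sol_rc0 Rr eps x Tm : is_solution_on Rr eps x Tm -> 0 < Tm ->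
  rc0 (fun t => T0_of (x t)) /\ rc0 (fun t => T2_of (x t)) /\ rc0 (fun t => eta_of (x t)).
Proof.
  intros [_ Hc] HT.
  assert (K : forall e, 0 < e -> exists d, 0 < d /\ forall t, 0 <= t < d -> dist3 (x t) (x 0) < e).
  { intros e He. destruct (Hc e He) as [d [Hd Hd']]. exists (Rmin d Tm). split. apply Rmin_pos; lra.
    intros t Ht. apply Hd'. pose proof (Rmin_l d Tm); lra. pose proof (Rmin_r d Tm); lra. }
  split; [|split]; intros e He; destruct (K e He) as [d [Hd Hd']]; exists d; split; auto;
    intros t Ht; destruct (dist3_lt _ _ _ (Hd' t Ht)) as [? [? ?]]; auto.
Qed.

Lemma sol_der Rr eps x Tm t : is_solution_on Rr eps x Tm -> 0 < t < Tm ->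
  is_derive (fun u => T0_of (x u)) t (rhs_T0 Rr (x t)) /\
  is_derive (fun u => T2_of (x u)) t (rhs_T2 Rr (x t)) /\
  is_derive (fun u => eta_of (x u)) t (rhs_eta eps (x t)).
Proof.
  intros [Hd _] Ht. destruct (Hd t Ht) as [A [B C]].
  split; [|split]; apply is_derive_Reals; auto.
Qed.

Definition Vx (es : R) (y : state) := Vexp (T0_of y) (T2_of y) (eta_of y) es.

Lemma stab_decay Rr eps es x Tm : 0 < Rr -> 0 < eps -> eps * Cc * (2 * Rr) <= 1 ->
  82/100 < es < 86/100 -> Hp es = 0 -> is_solution_on Rr eps x Tm ->
  Vx es (x 0) < (Rmin (es - 82/100) (86/100 - es))^2 ->
  forall t, 0 <= t < Tm -> exp (Rmin (2/Rr) (15*eps) * t) * Vx es (x t) <= Vx es (x 0).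
Proof.
  intros HR He HC Hes Hr Hsol HV0 t Ht.
  set (dl := Rmin (es - 82/100) (86/100 - es)) in *.
  assert (Hdl : 0 < dl) by (apply Rmin_pos; lra).
  assert (Hdl1 : dl <= es - 82/100) by apply Rmin_l. assert (Hdl2 : dl <= 86/100 - es) by apply Rmin_r.
  set (k := Rmin (2/Rr) (15*eps)).
  assert (Hk1 : k <= 2/Rr) by apply Rmin_l. assert (Hk2 : k <= 15*eps) by apply Rmin_r.
  assert (Hk : 0 < k) by (apply Rmin_pos; [apply Rdiv_lt_0_compat|]; lra).
  assert (HTm : 0 < Tm) by lra.
  destruct (sol_rc0 Rr eps x Tm Hsol HTm) as [R0 [R2 Re]].
  set (f := fun s => exp (k * s) * Vexp (T0_of (x s)) (T2_of (x s)) (eta_of (x s)) es).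
  set (dV := fun s => 2 * (T0_of (x s) - phi0p (eta_of (x s))) * (rhs_T0 Rr (x s) - dphi0p (eta_of (x s)) * rhs_eta eps (x s))
    + 2 * (T2_of (x s) - phi2p (eta_of (x s))) * (rhs_T2 Rr (x s) - dphi2p (eta_of (x s)) * rhs_eta eps (x s))
    + 2 * (eta_of (x s) - es) * rhs_eta eps (x s)).
  set (df := fun s => exp (k * s) * (k * Vexp (T0_of (x s)) (T2_of (x s)) (eta_of (x s)) es + dV s)).
  assert (Hf0 : f 0 = Vx es (x 0)) by (unfold f, Vx; rewrite Rmult_0_r, exp_0; ring).
  rewrite <- Hf0. apply (barrier f df Tm (dl^2)); auto.
  - intros s Hs. destruct (sol_der Rr eps x Tm s Hsol Hs) as [D0 [D2 De]].
    apply (W_der (fun s => Vexp (T0_of (x s)) (T2_of (x s)) (eta_of (x s)) es)).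
    apply V_der; auto.
  - intros s Hs Hfs. unfold df.
    assert (Hex : 1 <= exp (k * s)) by (pose proof (exp_ineq1_le (k * s)); nra).
    set (u0 := T0_of (x s) - phi0p (eta_of (x s))) in *.
    set (u2 := T2_of (x s) - phi2p (eta_of (x s))) in *.
    set (w := eta_of (x s) - es) in *.
    assert (HVnn : 0 <= Vexp (T0_of (x s)) (T2_of (x s)) (eta_of (x s)) es).
    { unfold Vexp. pose proof (pow2_ge_0 u0). pose proof (pow2_ge_0 u2). pose proof (pow2_ge_0 w). fold u0 u2 w. lra. }
    assert (HVs : Vexp (T0_of (x s)) (T2_of (x s)) (eta_of (x s)) es < dl^2).
    { unfold f in Hfs. nra. }
    assert (Hw : Rabs w < dl).
    { apply sq_lt; [lra|]. unfold Vexp in HVs. fold u0 u2 w in HVs. pose proof (pow2_ge_0 u0). pose proof (pow2_ge_0 u2). lra. }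
    apply Rabs_def2 in Hw.
    assert (Hin : 82/100 <= eta_of (x s) <= 86/100) by (unfold w in Hw; lra).
    assert (Hin01 : 0 <= eta_of (x s) <= 1) by lra.
    pose proof (loc2 es Hes Hr (eta_of (x s)) Hin) as L2.
    pose proof (Hp_lip (eta_of (x s)) es Hin01 ltac:(lra)) as Lh. rewrite Hr, Rminus_0_r in Lh.
    pose proof (stab_ineq Rr eps u0 u2 w (Hp (eta_of (x s))) (p2 (eta_of (x s))) (dphi0p (eta_of (x s))) (dphi2p (eta_of (x s)))
      HR He HC L2 Lh (p2_bd _ Hin01) (dphi0p_bd _ Hin01) (dphi2p_bd _ Hin01)) as SI.
    unfold dV. rewrite rhsT0_eq, rhsT2_eq, rhseta_eq by lra. fold u0 u2 w.
    assert (E : Vexp (T0_of (x s)) (T2_of (x s)) (eta_of (x s)) es = u0^2 + u2^2 + w^2) by reflexivity.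
    rewrite E.
    assert (k * (u0^2 + u2^2 + w^2) <= (2/Rr) * (u0^2 + u2^2) + 15 * eps * w^2).
    { pose proof (pow2_ge_0 u0). pose proof (pow2_ge_0 u2). pose proof (pow2_ge_0 w). nra. }
    assert (0 < exp (k * s)) by apply exp_pos.
    apply Rmult_le_0_l; [lra|]. lra.
  - unfold f. apply rc0_mult. apply rc0_expk. apply rc0_V; auto.
  - rewrite Hf0. exact HV0.
Qed.

Lemma Vx_nn es y : 0 <= Vx es y.
Proof. unfold Vx, Vexp. pose proof (pow2_ge_0 (T0_of y - phi0p (eta_of y))).
  pose proof (pow2_ge_0 (T2_of y - phi2p (eta_of y))). pose proof (pow2_ge_0 (eta_of y - es)). lra. Qed.

Lemma asym_stab Rr eps es : 0 < Rr -> 0 < eps -> eps * Cc * (2 * Rr) <= 1 ->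
  82/100 < es < 86/100 -> Hp es = 0 -> asymptotically_stable Rr eps (eqp es).
Proof.
  intros HR He HC Hes Hr.
  set (dl := Rmin (es - 82/100) (86/100 - es)).
  assert (Hdl : 0 < dl) by (apply Rmin_pos; lra).
  assert (Hdl1 : dl <= es - 82/100) by apply Rmin_l. assert (Hdl2 : dl <= 86/100 - es) by apply Rmin_r.
  set (k := Rmin (2/Rr) (15*eps)).
  assert (Hk : 0 < k) by (apply Rmin_pos; [apply Rdiv_lt_0_compat|]; lra).
  assert (Hes' : 1/10 <= es <= 9/10) by lra.
  split.
  - intros e Hee.
    set (r := Rmin dl (e / 201)).
    assert (Hr0 : 0 < r) by (apply Rmin_pos; lra).
    assert (Hr1 : r <= dl) by apply Rmin_l. assert (Hr2 : r <= e / 201) by apply Rmin_r.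
    exists (r / 400). split; [lra|].
    intros x Tm Hsol Hd0 t Ht.
    pose proof (dist_to_V (x 0) es (r/400) Hes' ltac:(lra) Hd0) as HV0.
    replace (400 * (r / 400)) with r in HV0 by field.
    fold (Vx es (x 0)) in HV0.
    assert (HV0' : Vx es (x 0) < dl^2) by (pose proof (pow_incr r dl 2 ltac:(lra)); lra).
    pose proof (stab_decay Rr eps es x Tm HR He HC Hes Hr Hsol HV0' t Ht) as D. fold k in D.
    pose proof (exp_ineq1_le (k * t)). pose proof (Vx_nn es (x t)).
    assert (Hkt : 0 <= k * t) by (apply Rmult_le_pos; lra).
    assert (Hx1 : Vx es (x t) <= exp (k * t) * Vx es (x t)) by nra.
    assert (Vx es (x t) < r^2) by lra.
    destruct (V_to_dist (x t) es r Hes' ltac:(lra) H1) as [Hd _]. lra.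
  - exists (dl / 400). split; [lra|].
    intros x Hg Hd0 e Hee.
    pose proof (dist_to_V (x 0) es (dl/400) Hes' ltac:(lra) Hd0) as HV0.
    replace (400 * (dl / 400)) with dl in HV0 by field. fold (Vx es (x 0)) in HV0.
    set (rho := Rmin dl (e / 201)).
    assert (Hr0 : 0 < rho) by (apply Rmin_pos; lra).
    assert (Hr1 : rho <= dl) by apply Rmin_l. assert (Hr2 : rho <= e / 201) by apply Rmin_r.
    exists (dl^2 / (k * rho^2)). intros t Ht.
    assert (Ht0 : 0 < dl^2 / (k * rho^2)) by (apply Rdiv_lt_0_compat; [nra|]; apply Rmult_lt_0_compat; nra).
    pose proof (stab_decay Rr eps es x (t+1) HR He HC Hes Hr (Hg (t+1) ltac:(lra)) HV0 t ltac:(lra)) as D. fold k in D.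
    pose proof (exp_ineq1_le (k * t)). pose proof (Vx_nn es (x t)).
    assert (Hkt : dl^2 / rho^2 <= k * t).
    { apply (Rmult_le_compat_l k) in Ht; [|lra].
      replace (k * (dl ^ 2 / (k * rho ^ 2))) with (dl^2/rho^2) in Ht by (field; split; lra). exact Ht. }
    assert (Hrho2 : 0 < rho^2) by nra.
    assert (Hdr : dl^2 / rho^2 * rho^2 = dl^2) by (field; lra).
    assert (Vx es (x t) < rho^2).
    { apply Rnot_le_lt. intro Hc.
      assert (exp (k * t) * Vx es (x t) >= (dl^2/rho^2) * rho^2).
      { apply Rle_ge. apply Rmult_le_compat; try lra. apply Rdiv_le_0_compat; nra. }
      lra. }
    destruct (V_to_dist (x t) es rho Hes' ltac:(lra) H1) as [Hd _]. lra.
Qed.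

Definition clamp (a b x : R) := Rmax a (Rmin b x).
Lemma clamp_in a b x : a <= b -> a <= clamp a b x <= b.
Proof. intro. unfold clamp, Rmax, Rmin. repeat destruct Rle_dec; lra. Qed.
Lemma clamp_id a b x : a <= x <= b -> clamp a b x = x.
Proof. intro. unfold clamp, Rmax, Rmin. repeat destruct Rle_dec; lra. Qed.
Lemma clamp_lip a b x y : a <= b -> Rabs (clamp a b x - clamp a b y) <= Rabs (x - y).
Proof.
  intro. unfold clamp, Rmax, Rmin.
  repeat destruct Rle_dec; apply Rabs_le; pose proof (Rle_abs (x - y)); pose proof (Rle_abs (-(x - y)));
  rewrite Rabs_Ropp in *; split; lra.
Qed.

Definition Ft (Rr eps : R) (i : idx) (v : st) : R :=
  match i with
  | I1 => Bc * (- (cs I1 v - phi0p (clamp 0 1 (cs I3 v)))) / Rr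
  | I2 => 4 * (- (cs I2 v - phi2p (clamp 0 1 (cs I3 v)))) / Rr
  | I3 => eps * (cs I1 v + clamp (-100) 100 (cs I2 v) * p2 (clamp 0 1 (cs I3 v)) - Tc)
  end.

Lemma FtI1 Rr eps v : Ft Rr eps I1 v = Bc * (- (cs I1 v - phi0p (clamp 0 1 (cs I3 v)))) / Rr.
Proof. reflexivity. Qed.
Lemma FtI2 Rr eps v : Ft Rr eps I2 v = 4 * (- (cs I2 v - phi2p (clamp 0 1 (cs I3 v)))) / Rr.
Proof. reflexivity. Qed.
Lemma FtI3 Rr eps v : Ft Rr eps I3 v = eps * (cs I1 v + clamp (-100) 100 (cs I2 v) * p2 (clamp 0 1 (cs I3 v)) - Tc).
Proof. reflexivity. Qed.

Lemma Ft_lip Rr eps : 0 < Rr -> 0 < eps -> Lip (Ft Rr eps) (201 * (19/10 + 4) / Rr + 301 * eps).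
Proof.
  intros HR He i u v. unfold nrm.
  set (a1 := Rabs (cs I1 u - cs I1 v)). set (a2 := Rabs (cs I2 u - cs I2 v)). set (a3 := Rabs (cs I3 u - cs I3 v)).
  assert (P1 : 0 <= a1) by apply Rabs_pos. assert (P2 : 0 <= a2) by apply Rabs_pos. assert (P3 : 0 <= a3) by apply Rabs_pos.
  pose proof (clamp_in 0 1 (cs I3 u) ltac:(lra)) as Cu. pose proof (clamp_in 0 1 (cs I3 v) ltac:(lra)) as Cv.
  pose proof (clamp_lip 0 1 (cs I3 u) (cs I3 v) ltac:(lra)) as Cl. fold a3 in Cl.
  assert (HRi : 0 < / Rr) by (apply Rinv_0_lt_compat; lra).
  assert (Hsum : 0 <= a1 + a2 + a3) by lra.
  destruct i; rewrite ?FtI1, ?FtI2, ?FtI3, ?BcE.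
  - pose proof (phi0p_lip _ _ Cu Cv) as Lp.
    replace (19/10 * - (cs I1 u - phi0p (clamp 0 1 (cs I3 u))) / Rr - 19/10 * - (cs I1 v - phi0p (clamp 0 1 (cs I3 v))) / Rr)
      with (19/10 * / Rr * ((phi0p (clamp 0 1 (cs I3 u)) - phi0p (clamp 0 1 (cs I3 v))) - (cs I1 u - cs I1 v))) by (field; lra).
    rewrite Rabs_mult, (Rabs_pos_eq (19/10 * / Rr)) by nra.
    assert (Rabs ((phi0p (clamp 0 1 (cs I3 u)) - phi0p (clamp 0 1 (cs I3 v))) - (cs I1 u - cs I1 v)) <= 200 * a3 + a1).
    { eapply Rle_trans. apply abs_sub_le. fold a1. lra. }
    assert (19/10 * / Rr * Rabs ((phi0p (clamp 0 1 (cs I3 u)) - phi0p (clamp 0 1 (cs I3 v))) - (cs I1 u - cs I1 v))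
       <= 19/10 * / Rr * (201 * (a1 + a2 + a3))) by (apply Rmult_le_compat_l; nra).
    unfold Rdiv. nra.
  - pose proof (phi2p_lip _ _ Cu Cv) as Lp.
    replace (4 * - (cs I2 u - phi2p (clamp 0 1 (cs I3 u))) / Rr - 4 * - (cs I2 v - phi2p (clamp 0 1 (cs I3 v))) / Rr)
      with (4 * / Rr * ((phi2p (clamp 0 1 (cs I3 u)) - phi2p (clamp 0 1 (cs I3 v))) - (cs I2 u - cs I2 v))) by (field; lra).
    rewrite Rabs_mult, (Rabs_pos_eq (4 * / Rr)) by nra.
    assert (Rabs ((phi2p (clamp 0 1 (cs I3 u)) - phi2p (clamp 0 1 (cs I3 v))) - (cs I2 u - cs I2 v)) <= 200 * a3 + a2).
    { eapply Rle_trans. apply abs_sub_le. fold a2. lra. }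
    assert (4 * / Rr * Rabs ((phi2p (clamp 0 1 (cs I3 u)) - phi2p (clamp 0 1 (cs I3 v))) - (cs I2 u - cs I2 v))
       <= 4 * / Rr * (201 * (a1 + a2 + a3))) by (apply Rmult_le_compat_l; nra).
    unfold Rdiv. nra.
  - set (cu := clamp (-100) 100 (cs I2 u)). set (cv := clamp (-100) 100 (cs I2 v)).
    set (pu := p2 (clamp 0 1 (cs I3 u))). set (pv := p2 (clamp 0 1 (cs I3 v))).
    assert (Hcv : Rabs cv <= 100) by (apply Rabs_le; apply clamp_in; lra).
    assert (Hcl : Rabs (cu - cv) <= a2) by (apply clamp_lip; lra).
    assert (Hpu : Rabs pu <= 1) by (apply p2_bd; auto).
    assert (Hpl : Rabs (pu - pv) <= 3 * a3) by (eapply Rle_trans; [apply p2_lip; auto| lra]).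
    replace (eps * (cs I1 u + cu * pu - Tc) - eps * (cs I1 v + cv * pv - Tc))
      with (eps * ((cs I1 u - cs I1 v) + ((cu - cv) * pu + cv * (pu - pv)))) by ring.
    rewrite Rabs_mult, (Rabs_pos_eq eps) by lra.
    assert (Rabs ((cs I1 u - cs I1 v) + ((cu - cv) * pu + cv * (pu - pv))) <= a1 + a2 + 300 * a3).
    { eapply Rle_trans. apply Rabs_triang. eapply Rle_trans. apply Rplus_le_compat_l. apply Rabs_triang.
      rewrite !Rabs_mult. fold a1.
      pose proof (Rabs_pos (cu - cv)). pose proof (Rabs_pos cv). pose proof (Rabs_pos (pu - pv)). pose proof (Rabs_pos pu).
      nra. }
    assert (eps * Rabs ((cs I1 u - cs I1 v) + ((cu - cv) * pu + cv * (pu - pv))) <= eps * (301 * (a1 + a2 + a3)))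
      by (apply Rmult_le_compat_l; lra).
    assert (0 <= 201 * (19/10 + 4) / Rr) by (unfold Rdiv; nra).
    nra.
Qed.

Lemma Ft_eq Rr eps v : 0 < Rr -> 0 <= cs I3 v <= 1 -> Rabs (cs I2 v) <= 100 ->
  Ft Rr eps I1 v = rhs_T0 Rr v /\ Ft Rr eps I2 v = rhs_T2 Rr v /\ Ft Rr eps I3 v = rhs_eta eps v.
Proof.
  intros HR H3 H2. apply Rabs_le_between in H2.
  rewrite rhsT0_eq, rhsT2_eq by lra. rewrite FtI1, FtI2, FtI3. rewrite !(clamp_id 0 1) by auto. rewrite (clamp_id (-100) 100) by lra.
  split; [|split]; try reflexivity.
Qed.

Lemma dR_sub0 (g : R -> R) (t a : R) : is_derive g t a -> is_derive (fun s => 0 - g s) t (0 - a).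
Proof. intro H. apply (dR_minus (fun _ => 0) g). apply dR_const. exact H. Qed.

Lemma instab Rr eps es : 0 < Rr -> 0 < eps -> eps * Cc * (2 * Rr) <= 1 ->
  19/100 < es < 23/100 -> Hp es = 0 -> unstable Rr eps (eqp es).
Proof.
  intros HR He HC Hes Hr Hstab.
  set (dl := Rmin (es - 19/100) (23/100 - es)).
  assert (Hdl : 0 < dl) by (apply Rmin_pos; lra).
  assert (Hdl1 : dl <= es - 19/100) by apply Rmin_l. assert (Hdl2 : dl <= 23/100 - es) by apply Rmin_r.
  destruct (Hstab (dl/2) ltac:(lra)) as [d [Hd Hst]].
  set (w0 := Rmin (d/400) (dl/4)).
  assert (Hw0 : 0 < w0) by (apply Rmin_pos; lra).
  assert (Hw01 : w0 <= d/400) by apply Rmin_l. assert (Hw02 : w0 <= dl/4) by apply Rmin_r.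
  set (y0 := eqp (es + w0)).
  set (L := 201 * (19/10 + 4) / Rr + 301 * eps).
  assert (HL : 0 <= L) by (unfold L; assert (0 < 201 * (19/10+4) / Rr) by (apply Rdiv_lt_0_compat; lra); lra).
  destruct (picard (Ft Rr eps) L y0 HL (Ft_lip Rr eps HR He)) as [y [Hy0 [Hyd Hyr]]].
  set (lam := 85 * eps).
  set (P := fun t => Pexp (cs I1 (y t)) (cs I2 (y t)) (cs I3 (y t)) es).
  assert (HP0 : P 0 = w0^2).
  { unfold P. rewrite Hy0. unfold y0, eqp, Pexp; simpl. ring. }
  assert (Hrc : forall i, rc0 (fun t => cs i (y t))).
  { intros i e Hee. destruct (Hyr e Hee) as [dd [Hdd Hdd']]. exists dd. split; auto.
    intros t Ht. rewrite Hy0. apply Hdd'; auto. }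
  assert (Hreg : forall t, Rabs (cs I3 (y t) - es) < dl -> 0 < P t ->
     0 <= cs I3 (y t) <= 1 /\ Rabs (cs I2 (y t)) <= 100 /\ 19/100 <= cs I3 (y t) <= 23/100).
  { intros t Hw HPt. apply Rabs_def2 in Hw.
    assert (Hin : 19/100 <= cs I3 (y t) <= 23/100) by lra.
    assert (Hin01 : 0 <= cs I3 (y t) <= 1) by lra.
    split; auto. split; auto.
    unfold P, Pexp in HPt.
    pose proof (pow2_ge_0 (cs I1 (y t) - phi0p (cs I3 (y t)))).
    assert ((cs I2 (y t) - phi2p (cs I3 (y t)))^2 < dl^2).
    { assert ((cs I3 (y t) - es)^2 < dl^2) by nra. lra. }
    pose proof (phi2p_bd _ Hin01).
    assert (Rabs (cs I2 (y t) - phi2p (cs I3 (y t))) < dl) by (apply sq_lt; lra).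
    replace (cs I2 (y t)) with ((cs I2 (y t) - phi2p (cs I3 (y t))) + phi2p (cs I3 (y t))) by ring.
    eapply Rle_trans. apply Rabs_triang. lra. }
  assert (Hgrow : forall T, (forall t, 0 <= t < T -> Rabs (cs I3 (y t) - es) < dl) ->
     forall t, 0 <= t < T -> w0^2 <= exp ((-lam) * t) * P t).
  { intros T HT t Ht.
    set (dP := fun s => 2 * (cs I3 (y s) - es) * Ft Rr eps I3 (y s)
       - 2 * (cs I1 (y s) - phi0p (cs I3 (y s))) * (Ft Rr eps I1 (y s) - dphi0p (cs I3 (y s)) * Ft Rr eps I3 (y s))
       - 2 * (cs I2 (y s) - phi2p (cs I3 (y s))) * (Ft Rr eps I2 (y s) - dphi2p (cs I3 (y s)) * Ft Rr eps I3 (y s))).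
    set (f := fun s => 0 - exp ((-lam) * s) * P s).
    set (df := fun s => 0 - exp ((-lam) * s) * ((-lam) * P s + dP s)).
    assert (Hf0 : f 0 = - w0^2) by (unfold f; rewrite Rmult_0_r, exp_0, HP0; ring).
    assert (Hft : f t <= f 0).
    { apply (barrier f df T 0); auto.
      - intros s Hs. unfold f, df. apply (dR_sub0 (fun s => exp ((-lam) * s) * P s)).
        apply (W_der P (-lam) s (dP s)). unfold P. apply P_der; apply Hyd; lra.
      - intros s Hs Hfs. unfold df.
        assert (Hex : 0 < exp ((-lam) * s)) by apply exp_pos.
        assert (HPs : 0 < P s) by (unfold f in Hfs; nra).
        destruct (Hreg s (HT s ltac:(lra)) HPs) as [Hin01 [HT2 Hin]].
        destruct (Ft_eq Rr eps (y s) HR Hin01 HT2) as [E1 [E2 E3]].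
        unfold dP. rewrite E1, E2, E3, rhsT0_eq, rhsT2_eq, rhseta_eq by lra.
        change (T0_of (y s)) with (cs I1 (y s)). change (T2_of (y s)) with (cs I2 (y s)).
        change (eta_of (y s)) with (cs I3 (y s)).
        pose proof (loc1 es Hes Hr (cs I3 (y s)) Hin) as L1.
        assert (L1' : 50 * (cs I3 (y s) - es)^2 <= (cs I3 (y s) - es) * Hp (cs I3 (y s))) by exact L1.
        pose proof (Hp_lip (cs I3 (y s)) es Hin01 ltac:(lra)) as Lh. rewrite Hr, Rminus_0_r in Lh.
        pose proof (inst_ineq Rr eps (cs I1 (y s) - phi0p (cs I3 (y s))) (cs I2 (y s) - phi2p (cs I3 (y s)))
          (cs I3 (y s) - es) (Hp (cs I3 (y s))) (p2 (cs I3 (y s))) (dphi0p (cs I3 (y s))) (dphi2p (cs I3 (y s)))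
          HR He HC L1' Lh (p2_bd _ Hin01) (dphi0p_bd _ Hin01) (dphi2p_bd _ Hin01)) as II.
        assert (HPle : P s <= (cs I3 (y s) - es)^2).
        { unfold P, Pexp. pose proof (pow2_ge_0 (cs I1 (y s) - phi0p (cs I3 (y s)))).
          pose proof (pow2_ge_0 (cs I2 (y s) - phi2p (cs I3 (y s)))). lra. }
        assert (lam * P s <= 85 * eps * (cs I3 (y s) - es)^2) by (unfold lam; nra).
        assert (0 <= (-lam) * P s + (2 * (cs I3 (y s) - es) * (eps * (Hp (cs I3 (y s)) + (cs I1 (y s) - phi0p (cs I3 (y s))) + (cs I2 (y s) - phi2p (cs I3 (y s))) * p2 (cs I3 (y s))))
          - 2 * (cs I1 (y s) - phi0p (cs I3 (y s))) * (Bc * - (cs I1 (y s) - phi0p (cs I3 (y s))) / Rr - dphi0p (cs I3 (y s)) * (eps * (Hp (cs I3 (y s)) + (cs I1 (y s) - phi0p (cs I3 (y s))) + (cs I2 (y s) - phi2p (cs I3 (y s))) * p2 (cs I3 (y s)))))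
          - 2 * (cs I2 (y s) - phi2p (cs I3 (y s))) * (4 * - (cs I2 (y s) - phi2p (cs I3 (y s))) / Rr - dphi2p (cs I3 (y s)) * (eps * (Hp (cs I3 (y s)) + (cs I1 (y s) - phi0p (cs I3 (y s))) + (cs I2 (y s) - phi2p (cs I3 (y s))) * p2 (cs I3 (y s))))))) by lra.
        assert (0 <= exp ((-lam) * s) * ((-lam) * P s + (2 * (cs I3 (y s) - es) * (eps * (Hp (cs I3 (y s)) + (cs I1 (y s) - phi0p (cs I3 (y s))) + (cs I2 (y s) - phi2p (cs I3 (y s))) * p2 (cs I3 (y s))))
          - 2 * (cs I1 (y s) - phi0p (cs I3 (y s))) * (Bc * - (cs I1 (y s) - phi0p (cs I3 (y s))) / Rr - dphi0p (cs I3 (y s)) * (eps * (Hp (cs I3 (y s)) + (cs I1 (y s) - phi0p (cs I3 (y s))) + (cs I2 (y s) - phi2p (cs I3 (y s))) * p2 (cs I3 (y s)))))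
          - 2 * (cs I2 (y s) - phi2p (cs I3 (y s))) * (4 * - (cs I2 (y s) - phi2p (cs I3 (y s))) / Rr - dphi2p (cs I3 (y s)) * (eps * (Hp (cs I3 (y s)) + (cs I1 (y s) - phi0p (cs I3 (y s))) + (cs I2 (y s) - phi2p (cs I3 (y s))) * p2 (cs I3 (y s)))))))) by (apply Rmult_le_pos; lra).
        lra.
      - unfold f. apply (rc0_minus (fun _ => 0) (fun s => exp ((-lam) * s) * P s)). apply rc0_cst.
        apply (rc0_mult (fun s => exp ((-lam) * s)) P). apply rc0_expk. unfold P. apply rc0_P; apply Hrc.
      - rewrite Hf0. nra. }
    rewrite Hf0 in Hft. unfold f in Hft. lra. }
  assert (Hlam : 0 < lam) by (unfold lam; lra).
  assert (HA : exists t1, 0 <= t1 /\ dl <= Rabs (cs I3 (y t1) - es)).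
  { apply NNPP. intro Hn.
    assert (Hall : forall t, 0 <= t -> Rabs (cs I3 (y t) - es) < dl).
    { intros t Ht. apply Rnot_le_lt. intro Hc. apply Hn. exists t. auto. }
    set (Ts := dl^2 / (lam * w0^2)).
    assert (Hw2 : 0 < w0^2) by nra.
    assert (HTs : 0 < Ts) by (unfold Ts; apply Rdiv_lt_0_compat; [nra|]; apply Rmult_lt_0_compat; lra).
    pose proof (Hgrow (Ts + 1) (fun t Ht => Hall t (proj1 Ht)) Ts ltac:(lra)) as Hg.
    assert (Hm : exp (lam * Ts) * (exp ((-lam) * Ts) * P Ts) = P Ts).
    { rewrite <- Rmult_assoc, <- exp_plus. replace (lam * Ts + - lam * Ts) with 0 by ring. rewrite exp_0; ring. }
    assert (Hexp : 0 < exp (lam * Ts)) by apply exp_pos.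
    assert (H1 : exp (lam * Ts) * w0^2 <= P Ts) by (rewrite <- Hm; apply Rmult_le_compat_l; lra).
    pose proof (exp_ineq1_le (lam * Ts)) as H2.
    assert (H3 : w0^2 * (lam * Ts) = dl^2) by (unfold Ts; field; lra).
    assert (HPle : P Ts <= (cs I3 (y Ts) - es)^2).
    { unfold P, Pexp. pose proof (pow2_ge_0 (cs I1 (y Ts) - phi0p (cs I3 (y Ts)))).
      pose proof (pow2_ge_0 (cs I2 (y Ts) - phi2p (cs I3 (y Ts)))). lra. }
    pose proof (Hall Ts ltac:(lra)) as H4. apply Rabs_def2 in H4.
    assert ((cs I3 (y Ts) - es)^2 < dl^2) by nra.
    nra. }
  destruct HA as [t1 [Ht1 Hge]].
  set (g := fun t => Rabs (cs I3 (y t) - es)).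
  assert (Hg0 : g 0 = w0).
  { unfold g. rewrite Hy0. unfold y0, eqp. simpl. replace (es + w0 - es) with w0 by ring. apply Rabs_pos_eq; lra. }
  assert (Ht1p : 0 < t1).
  { destruct (Req_dec t1 0) as [->|]; [|lra]. fold (g 0) in Hge. lra. }
  assert (Hgc : forall t, 0 < t -> continuity_pt g t).
  { intros t Ht. apply (continuity_pt_comp (fun s => cs I3 (y s) - es) Rabs).
    eapply der_cpt. apply (dR_minus (fun s => cs I3 (y s)) (fun _ => es)). apply Hyd; lra. apply dR_const.
    apply Rcontinuity_abs. }
  assert (Hgr : rc0 g).
  { apply (rc0_comp Rabs (fun t => cs I3 (y t) - es)). apply Rcontinuity_abs.
    apply (rc0_minus (fun t => cs I3 (y t)) (fun _ => es)). apply Hrc. apply rc0_cst. }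
  destruct (first_time g t1 dl Ht1p) as [t2 [Ht2 [Hgt2 Hbef]]]; auto; try lra.
  { intros t Ht. apply Hgc; lra. }
  assert (Hpos : forall s, 0 <= s < t2 -> 0 < P s).
  { intros s Hs. pose proof (Hgrow t2 Hbef s Hs). pose proof (exp_pos ((-lam) * s)).
    assert (0 < w0^2) by nra. nra. }
  assert (Hsol : is_solution_on Rr eps y t2).
  { split.
    - intros t Ht. destruct (Hreg t (Hbef t ltac:(lra)) (Hpos t ltac:(lra))) as [Hin01 [HT2 _]].
      destruct (Ft_eq Rr eps (y t) HR Hin01 HT2) as [E1 [E2 E3]].
      pose proof (Hyd t (proj1 Ht) I1) as D1. pose proof (Hyd t (proj1 Ht) I2) as D2. pose proof (Hyd t (proj1 Ht) I3) as D3.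
      rewrite E1 in D1. rewrite E2 in D2. rewrite E3 in D3.
      split; [|split]; apply is_derive_Reals; assumption.
    - intros e Hee. destruct (Hyr e Hee) as [dd [Hdd Hdd']]. exists dd. split; auto.
      intros t Ht _. rewrite Hy0. apply lt_dist3; [apply (Hdd' t Ht I1)|apply (Hdd' t Ht I2)|apply (Hdd' t Ht I3)]. }
  assert (Hd0 : dist3 (y 0) (eqp es) < d).
  { rewrite Hy0. unfold y0, eqp. apply lt_dist3; unfold T0_of, T2_of, eta_of; simpl.
    - pose proof (phi0p_lip (es + w0) es ltac:(lra) ltac:(lra)). replace (es + w0 - es) with w0 in H by ring.
      rewrite (Rabs_pos_eq w0) in H by lra. lra.
    - pose proof (phi2p_lip (es + w0) es ltac:(lra) ltac:(lra)). replace (es + w0 - es) with w0 in H by ring.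
      rewrite (Rabs_pos_eq w0) in H by lra. lra.
    - replace (es + w0 - es) with w0 by ring. rewrite Rabs_pos_eq; lra. }
  pose proof (Hst y t2 Hsol Hd0) as Hsm.
  destruct (cpt_elim g t2 (Hgc t2 ltac:(lra)) (dl/2) ltac:(lra)) as [dd [Hdd Hdd']].
  set (s := t2 - Rmin dd t2 / 2).
  assert (0 < Rmin dd t2) by (apply Rmin_pos; lra).
  assert (Rmin dd t2 <= dd) by apply Rmin_l. assert (Rmin dd t2 <= t2) by apply Rmin_r.
  specialize (Hdd' s ltac:(unfold s; rewrite Rabs_left; lra)).
  specialize (Hsm s ltac:(unfold s; lra)).
  pose proof (dist3_ge_eta (y s) (eqp es)) as Hge2.
  change (eta_of (eqp es)) with es in Hge2. change (eta_of (y s)) with (cs I3 (y s)) in Hge2.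
  assert (Hgs : g s < dl/2) by (unfold g; lra).
  apply Rabs_def2 in Hdd'. lra.
Qed.

Theorem proposition1 :
  forall Rr : R, 0 < Rr ->
  exists eps0 : R, 0 < eps0 /\
  forall eps : R, 0 < eps < eps0 ->
  exists e1 e2 : state,
    is_equilibrium Rr eps e1 /\ is_equilibrium Rr eps e2 /\
    0 <= eta_of e1 /\ eta_of e1 < eta_of e2 /\ eta_of e2 <= 1 /\
    (forall x : state, is_equilibrium Rr eps x ->
       0 <= eta_of x <= 1 -> x = e1 \/ x = e2) /\
    unstable Rr eps e1 /\
    asymptotically_stable Rr eps e2.
Proof.
  intros Rr HR. pose proof Cc_pos as HCc.
  exists (1 / (2 * Rr * Cc)). split.
  { apply Rdiv_lt_0_compat; [lra|]. apply Rmult_lt_0_compat; lra. }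
  intros eps [He Heps].
  assert (HC : eps * Cc * (2 * Rr) <= 1).
  { apply (Rmult_lt_compat_r (2 * Rr * Cc)) in Heps; [|apply Rmult_lt_0_compat; lra].
    replace (1 / (2 * Rr * Cc) * (2 * Rr * Cc)) with 1 in Heps by (field; lra). lra. }
  destruct root1_ex as [e1 [H1 H10]]. destruct root2_ex as [e2 [H2 H20]].
  exists (eqp e1), (eqp e2).
  split; [apply eqp_equil; auto|].
  split; [apply eqp_equil; auto|].
  unfold eta_of at 1 2 3 4; simpl.
  split; [lra|]. split; [lra|]. split; [lra|].
  split.
  - intros x Hx Hin. apply equil_char in Hx as [A [B C]]; auto.
    destruct (uniq_roots e1 e2 H1 H10 H2 H20 (eta_of x) Hin C) as [E|E]; [left|right];
      destruct x as [[a b] c]; unfold T0_of, T2_of, eta_of, eqp in *; simpl in *; subst; reflexivity.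
  - split.
    + apply instab; auto.
    + apply asym_stab; auto.
Qed.
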